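(* Let $\Gamma\subset\mathbb{C}^*$ be a subgroup with the accumulation property, i.e. either $\Gamma$ contains an element $q$ with $|q|\ne1$, or $\Gamma$ contains a sequence $\gamma_n\to1$ in $\mathbb{C}^*$ with $\gamma_n\ne1$. Let $\widetilde\psi:\mathbb{C}^*\to\mathbb{C}^*$ be holomorphic and $\sigma:\Gamma\to\Gamma$ a group homomorphism with $\widetilde\psi(\gamma z)=\sigma(\gamma)\widetilde\psi(z)$ for all $\gamma\in\Gamma$, $z\in\mathbb{C}^*$. Then there exist $a\in\mathbb{C}^*$ and $n\in\mathbb{Z}$ such that $\widetilde\psi(z)=az^n$ and $\sigma(\gamma)=\gamma^n$ for all $\gamma\in\Gamma$. *)

(* Defs.v *)
From Stdlib Require Import Reals ZArith.
From Coquelicot Require Import Coquelicot.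

Definition Czpow (z : C) (n : Z) : C :=
  match n with
  | Z0 => 1%C
  | Zpos p => Cpow z (Pos.to_nat p)
  | Zneg p => Cinv (Cpow z (Pos.to_nat p))
  end.

Definition is_subgroup_Cstar (G : C -> Prop) : Prop :=
  (forall g : C, G g -> g <> 0%C) /\ G 1%C /\
  (forall g h : C, G g -> G h -> G (g * h)%C) /\
  (forall g : C, G g -> G (Cinv g)).

Definition accumulation_property (G : C -> Prop) : Prop :=
  (exists q : C, G q /\ Cmod q <> 1%R) \/
  (exists g : nat -> C, (forall n, G (g n) /\ g n <> 1%C) /\
     filterlim g eventually (locally (1%C : C))).

Definition holomorphic_Cstar (f : C -> C) : Prop :=
  forall z : C, z <> 0%C -> @ex_derive C_AbsRing C_NormedModule f z.

Definition group_hom_on (G : C -> Prop) (s : C -> C) : Prop :=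
  (forall g : C, G g -> G (s g)) /\
  (forall g h : C, G g -> G h -> s (g * h)%C = (s g * s h)%C).

(* Main.v *)
Require Import Defs.
From Stdlib Require Import Reals ZArith Lra Lia ClassicalEpsilon Classical.
From Coquelicot Require Import Coquelicot.

Open Scope R_scope.

Lemma Ceq (a b : C) : fst a = fst b -> snd a = snd b -> a = b.
Proof. destruct a, b; simpl; intros; subst; auto. Qed.

Lemma normCR (x : C_R_NormedModule) : norm x = Cmod x.
Proof. destruct x as [a b]. unfold norm; simpl. unfold prod_norm, Cmod; simpl.
  unfold norm; simpl. unfold abs; simpl. f_equal.
  rewrite !Rmult_1_r. rewrite <- !Rabs_mult. rewrite !Rabs_right; try reflexivity; apply Rle_ge, Rle_0_sqr. Qed.

Lemma normC (x : C_NormedModule) : norm x = Cmod x.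
Proof. reflexivity. Qed.

Lemma minusCR (x y : C_R_NormedModule) : minus x y = Cminus x y.
Proof. reflexivity. Qed.

Lemma minusC (x y : C_NormedModule) : minus x y = Cminus x y.
Proof. reflexivity. Qed.

Lemma plusCR (x y : C_R_NormedModule) : plus x y = Cplus x y.
Proof. reflexivity. Qed.

Lemma scalCR (k : R) (x : C_R_NormedModule) : scal k x = Cmult (RtoC k) x.
Proof. apply Ceq; simpl; unfold scal; simpl; unfold mult; simpl; ring. Qed.

Lemma scalC (k : C_AbsRing) (x : C_NormedModule) : scal k x = Cmult k x.
Proof. reflexivity. Qed.

Lemma Cmod_le_sum (z : C) : Cmod z <= Rabs (fst z) + Rabs (snd z).
Proof.
  destruct z as [a b]; unfold Cmod; simpl.
  rewrite <- (sqrt_Rsqr (Rabs a + Rabs b)) by (pose proof (Rabs_pos a); pose proof (Rabs_pos b); lra).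
  apply sqrt_le_1_alt. pose proof (Rsqr_abs a); pose proof (Rsqr_abs b). unfold Rsqr in *. simpl.
  pose proof (Rabs_pos a); pose proof (Rabs_pos b); nra.
Qed.

Open Scope R_scope.

Definition cdiff (f : C -> C) (z l : C) := forall eps, 0 < eps -> exists d, 0 < d /\
  forall y, Cmod (y - z) < d -> Cmod (f y - f z - (y - z) * l) <= eps * Cmod (y - z).

Lemma ballC_of (z y : C) d : Cmod (y - z) < d -> @ball C_UniformSpace z d y.
Proof.
  intros H. split; simpl; unfold AbsRing_ball, abs, minus, plus, opp; simpl.
  - eapply Rle_lt_trans; [|apply H]. pose proof (re_le_Cmod (y - z)%C). simpl in H0. exact H0.
  - eapply Rle_lt_trans; [|apply H]. pose proof (Rmax_Cmod (y - z)%C). simpl in H0.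
    eapply Rle_trans; [|apply H0]. apply Rmax_r.
Qed.

Lemma Cmod_of_ball (z y : C) d : @ball C_UniformSpace z d y -> Cmod (y - z) < 2 * d.
Proof.
  intros [H1 H2]. change (Rabs (fst y - fst z) < d) in H1. change (Rabs (snd y - snd z) < d) in H2.
  eapply Rle_lt_trans. apply Cmod_le_sum. simpl. unfold Rminus in *. lra.
Qed.

Lemma derive_cdiff (f : C -> C) z l : @is_derive C_AbsRing C_NormedModule f z l -> cdiff f z l.
Proof.
  intros [_ Hd] eps Heps.
  specialize (Hd z (fun P H => H)).
  destruct (Hd (mkposreal eps Heps)) as [d Hd']. exists d. split. apply cond_pos.
  intros y Hy. apply (Hd' y). exact Hy.
Qed.

Lemma cdiff_derive (f : C -> C) z l : cdiff f z l -> @is_derive C_AbsRing C_NormedModule f z l.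
Proof.
  intros H. split. apply is_linear_scal_l.
  intros x Hx. apply (@is_filter_lim_locally_unique _ (AbsRing_NormedModule C_AbsRing)) in Hx. subst x.
  intros eps. destruct (H eps (cond_pos eps)) as [d [Hd Hd']].
  exists (mkposreal d Hd). intros y Hy. apply Hd'. exact Hy.
Qed.

Lemma normCR_le (a b : C) (k : R) (w : C) (r : R) :
  Cmod (a - b - RtoC k * w)%C <= r ->
  @norm R_AbsRing C_R_NormedModule (minus (minus a b) (scal k w)) <= r.
Proof. intros H. rewrite normCR, scalCR. exact H. Qed.

Lemma cdiff_path (f : C -> C) (p v l : C) (t0 : R) :
  cdiff f (p + RtoC t0 * v)%C l ->
  @is_derive R_AbsRing C_R_NormedModule (fun t => f (p + RtoC t * v)%C) t0 (v * l)%C.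
Proof.
  intros H. split. apply is_linear_scal_l.
  intros x Hx. apply (@is_filter_lim_locally_unique _ (AbsRing_NormedModule R_AbsRing)) in Hx. subst x.
  intros eps.
  set (V := Cmod v). assert (HV : 0 <= V) by apply Cmod_ge_0.
  destruct (H (eps / (V + 1)) ltac:(apply Rdiv_lt_0_compat; [apply cond_pos|lra])) as [d [Hd Hd']].
  exists (mkposreal (d / (V + 1)) ltac:(apply Rdiv_lt_0_compat; lra)).
  intros t Ht. change (Rabs (t - t0) < d / (V + 1)) in Ht.
  change (norm (minus t t0)) with (Rabs (t - t0)).
  apply normCR_le.
  assert (E : ((p + RtoC t * v) - (p + RtoC t0 * v) = RtoC (t - t0) * v)%C).
  { rewrite RtoC_minus. ring. }
  assert (Hm : Cmod ((p + RtoC t * v) - (p + RtoC t0 * v))%C = Rabs (t - t0) * V).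
  { rewrite E, Cmod_mult, Cmod_R. reflexivity. }
  assert (Hlt : Cmod ((p + RtoC t * v) - (p + RtoC t0 * v))%C < d).
  { rewrite Hm. pose proof (Rabs_pos (t - t0)).
    apply Rle_lt_trans with (Rabs (t - t0) * (V + 1)). nra.
    apply Rmult_lt_reg_r with (/ (V + 1)). apply Rinv_0_lt_compat; lra.
    rewrite Rmult_assoc, Rinv_r by lra. rewrite Rmult_1_r. exact Ht. }
  specialize (Hd' _ Hlt). rewrite E in Hd'. rewrite <- E in Hd' at 2. rewrite Hm in Hd'.
  change (minus t t0) with (t - t0).
  replace (RtoC (t - t0) * (v * l))%C with (RtoC (t - t0) * v * l)%C by ring.
  eapply Rle_trans. apply Hd'. pose proof (Rabs_pos (t - t0)).
  assert (eps / (V + 1) * (Rabs (t - t0) * V) = eps * Rabs (t - t0) * (V / (V + 1))) by (field; lra).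
  rewrite H1. rewrite <- (Rmult_1_r (eps * Rabs (t - t0))) at 2.
  apply Rmult_le_compat_l. pose proof (cond_pos eps); nra.
  apply Rmult_le_reg_r with (V + 1). lra. unfold Rdiv. rewrite Rmult_assoc, Rinv_l by lra. lra.
Qed.

Definition ccont (f : C -> C) (z : C) := forall eps, 0 < eps -> exists d, 0 < d /\
  forall y, Cmod (y - z) < d -> Cmod (f y - f z) < eps.

Lemma cdiff_ccont f z l : cdiff f z l -> ccont f z.
Proof.
  intros H eps Heps. destruct (H 1 Rlt_0_1) as [d [Hd Hd']].
  set (L := Cmod l). assert (0 <= L) by apply Cmod_ge_0.
  exists (Rmin d (eps / (L + 2))). split.
  { apply Rmin_pos. lra. apply Rdiv_lt_0_compat; lra. }
  intros y Hy. assert (Hy1 : Cmod (y - z) < d) by (eapply Rlt_le_trans; [apply Hy|apply Rmin_l]).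
  assert (Hy2 : Cmod (y - z) < eps / (L + 2)) by (eapply Rlt_le_trans; [apply Hy|apply Rmin_r]).
  specialize (Hd' y Hy1).
  replace (f y - f z)%C with ((f y - f z - (y - z) * l) + (y - z) * l)%C by ring.
  eapply Rle_lt_trans. apply Cmod_triangle. rewrite Cmod_mult.
  pose proof (Cmod_ge_0 (y - z)%C).
  apply Rle_lt_trans with (Cmod (y - z) * (L + 2)). fold L. nra.
  apply Rmult_lt_reg_r with (/ (L + 2)). apply Rinv_0_lt_compat; lra.
  rewrite Rmult_assoc, Rinv_r by lra. rewrite Rmult_1_r. exact Hy2.
Qed.

Lemma ball_CR (z y : C) (eps : R) : Cmod (y - z) < eps ->
  @ball (NormedModule.UniformSpace R_AbsRing C_R_NormedModule) z eps y.
Proof.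
  intros H. split.
  - change (Rabs (fst y - fst z) < eps). eapply Rle_lt_trans; [|apply H].
    pose proof (re_le_Cmod (y - z)%C). exact H0.
  - change (Rabs (snd y - snd z) < eps). eapply Rle_lt_trans; [|apply H].
    pose proof (Rmax_Cmod (y - z)%C). simpl in H0.
    eapply Rle_trans; [|apply H0]. apply Rmax_r.
Qed.

Lemma comp_cont (f : C -> C) (g : R -> C) (t0 c : R) : 0 <= c ->
  (forall t, Cmod (g t - g t0) <= c * Rabs (t - t0)) -> ccont f (g t0) ->
  @continuous R_UniformSpace (NormedModule.UniformSpace R_AbsRing C_R_NormedModule) (fun t => f (g t)) t0.
Proof.
  intros Hc Hg Hf. apply filterlim_locally. intros eps.
  destruct (Hf eps (cond_pos eps)) as [d [Hd Hd']].
  exists (mkposreal (d / (c + 1)) ltac:(apply Rdiv_lt_0_compat; lra)).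
  intros t Ht. change (Rabs (t - t0) < d / (c + 1)) in Ht.
  apply ball_CR. apply Hd'. eapply Rle_lt_trans. apply Hg.
  pose proof (Rabs_pos (t - t0)).
  apply Rle_lt_trans with (Rabs (t - t0) * (c + 1)). nra.
  apply Rmult_lt_reg_r with (/ (c + 1)). apply Rinv_0_lt_compat; lra.
  rewrite Rmult_assoc, Rinv_r by lra. rewrite Rmult_1_r. exact Ht.
Qed.

Lemma ex_RInt_comp (f : C -> C) (g : R -> C) (c a b : R) : 0 <= c ->
  (forall t s, Cmod (g t - g s) <= c * Rabs (t - s)) -> (forall t, ccont f (g t)) ->
  @ex_RInt C_R_CompleteNormedModule (fun t => f (g t)) a b.
Proof.
  intros Hc Hg Hf. apply ex_RInt_continuous. intros z _.
  apply (comp_cont f g z c Hc). intros; apply Hg. apply Hf.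
Qed.

Open Scope R_scope.

Definition cexp (w : C) : C := (exp (fst w) * cos (snd w), exp (fst w) * sin (snd w)).

Lemma cexp_add a b : cexp (a + b)%C = (cexp a * cexp b)%C.
Proof. destruct a as [a1 a2], b as [b1 b2]. unfold cexp; apply Ceq; simpl;
  rewrite exp_plus, ?cos_plus, ?sin_plus; ring. Qed.

Lemma cexp_0 : cexp (RtoC 0) = RtoC 1.
Proof. unfold cexp; apply Ceq; simpl; rewrite ?exp_0, ?cos_0, ?sin_0; ring. Qed.

Lemma Cmod_cexp w : Cmod (cexp w) = exp (fst w).
Proof.
  unfold cexp, Cmod; simpl. pose proof (exp_pos (fst w)).
  replace ((exp (fst w) * cos (snd w)) * ((exp (fst w) * cos (snd w)) * 1) +
     (exp (fst w) * sin (snd w)) * ((exp (fst w) * sin (snd w)) * 1))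
    with (exp (fst w) * exp (fst w) * ((sin (snd w))² + (cos (snd w))²)) by (unfold Rsqr; ring).
  rewrite sin2_cos2, Rmult_1_r. apply sqrt_square. lra.
Qed.

Lemma cexp_neq0 w : cexp w <> RtoC 0.
Proof. intros H. pose proof (Cmod_cexp w). rewrite H, Cmod_0 in H0. pose proof (exp_pos (fst w)). lra. Qed.

Lemma cexp_opp w : Cmult (cexp (Copp w)) (cexp w) = RtoC 1.
Proof. rewrite <- cexp_add. replace (Cplus (Copp w) w) with (RtoC 0) by ring. apply cexp_0. Qed.

Definition c2pi : C := (0%R, (2 * PI)%R).

Lemma cexp_2pi w : cexp (w + c2pi)%C = cexp w.
Proof. rewrite cexp_add. replace (cexp c2pi) with (RtoC 1). ring.
  unfold cexp; apply Ceq; simpl; rewrite ?exp_0, ?cos_2PI, ?sin_2PI; ring. Qed.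

Lemma cexp_surj (z : C) : z <> RtoC 0 -> exists w, cexp w = z.
Proof.
  intros Hz. destruct z as [x y]. set (r := Cmod (x, y)).
  assert (Hr : 0 < r) by (apply Cmod_gt_0; exact Hz).
  assert (Hr2 : r * r = x * x + y * y).
  { unfold r, Cmod; simpl. rewrite sqrt_sqrt. ring. nra. }
  assert (Hx : -1 <= x / r <= 1).
  { pose proof (re_le_Cmod (x, y)). simpl in H. fold r in H.
    apply Rabs_le_between. unfold Rdiv. rewrite Rabs_mult, Rabs_inv, (Rabs_right r) by lra.
    apply Rmult_le_reg_r with r. lra. rewrite Rmult_assoc, Rinv_l by lra. lra. }
  assert (Hs : sqrt (1 - (x / r)²) = Rabs y / r).
  { replace (1 - (x / r)²) with ((y / r)²). rewrite sqrt_Rsqr_abs. unfold Rdiv.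
    rewrite Rabs_mult, Rabs_inv, (Rabs_right r) by lra. reflexivity.
    unfold Rsqr. apply Rmult_eq_reg_r with (r * r). 2: nra.
    replace (y / r * (y / r) * (r * r)) with (y * y) by (field; lra).
    replace ((1 - x / r * (x / r)) * (r * r)) with (r * r - x * x) by (field; lra). lra. }
  destruct (Rle_dec 0 y) as [Hy|Hy].
  - exists (ln r, acos (x / r)). unfold cexp; apply Ceq; simpl; rewrite exp_ln by lra.
    + rewrite cos_acos by lra. field. lra.
    + rewrite sin_acos by lra. rewrite Hs, Rabs_right by lra. field. lra.
  - exists (ln r, - acos (x / r)). unfold cexp; apply Ceq; simpl; rewrite exp_ln by lra.
    + rewrite cos_neg, cos_acos by lra. field. lra.
    + rewrite sin_neg, sin_acos by lra. rewrite Hs, Rabs_left by lra. field. lra.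
Qed.

Lemma dpl_bound f x l : derivable_pt_lim f x l -> forall eps, 0 < eps -> exists d, 0 < d /\
  forall h, Rabs h < d -> Rabs (f (x + h) - f x - l * h) <= eps * Rabs h.
Proof.
  intros H eps Heps. destruct (H eps Heps) as [d Hd]. exists d. split. apply cond_pos.
  intros h Hh. destruct (Req_dec h 0) as [->|Hn].
  - rewrite Rplus_0_r, Rabs_R0. replace (f x - f x - l * 0) with 0 by ring. rewrite Rabs_R0. lra.
  - specialize (Hd h Hn Hh).
    replace (f (x + h) - f x - l * h) with (((f (x + h) - f x) / h - l) * h) by (field; auto).
    rewrite Rabs_mult. apply Rmult_le_compat_r. apply Rabs_pos. lra.
Qed.

Lemma Rabs_im_le (z : C) : Rabs (snd z) <= Cmod z.
Proof. pose proof (Rmax_Cmod z). eapply Rle_trans; [|apply H]. apply Rmax_r. Qed.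

Lemma Rabs_re_le (z : C) : Rabs (fst z) <= Cmod z.
Proof. apply re_le_Cmod. Qed.

Lemma cexp_small eps : 0 < eps -> exists d, 0 < d /\ forall h : C,
  Cmod h < d -> Cmod (cexp h - RtoC 1 - h)%C <= eps * Cmod h.
Proof.
  intros Heps. set (e1 := Rmin 1 (eps / 8)).
  assert (He1 : 0 < e1) by (apply Rmin_pos; lra).
  assert (He1a : e1 <= 1) by apply Rmin_l. assert (He1b : e1 <= eps / 8) by apply Rmin_r.
  destruct (dpl_bound exp 0 (exp 0) (derivable_pt_lim_exp 0) e1 He1) as [d1 [Hd1 Hd1']].
  destruct (dpl_bound sin 0 (cos 0) (derivable_pt_lim_sin 0) e1 He1) as [d2 [Hd2 Hd2']].
  destruct (dpl_bound cos 0 (- sin 0) (derivable_pt_lim_cos 0) e1 He1) as [d3 [Hd3 Hd3']].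
  set (d := Rmin (Rmin d1 d2) (Rmin d3 (Rmin (1/2) (eps / 8)))).
  assert (Hd : 0 < d) by (repeat apply Rmin_pos; lra).
  assert (Hdd1 : d <= d1) by (unfold d; eapply Rle_trans; [apply Rmin_l|apply Rmin_l]).
  assert (Hdd2 : d <= d2) by (unfold d; eapply Rle_trans; [apply Rmin_l|apply Rmin_r]).
  assert (Hdd3 : d <= d3) by (unfold d; eapply Rle_trans; [apply Rmin_r|apply Rmin_l]).
  assert (Hdd4 : d <= 1/2) by (unfold d; eapply Rle_trans; [apply Rmin_r|];
    eapply Rle_trans; [apply Rmin_r|apply Rmin_l]).
  assert (Hdd5 : d <= eps/8) by (unfold d; eapply Rle_trans; [apply Rmin_r|];
    eapply Rle_trans; [apply Rmin_r|apply Rmin_r]).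
  exists d. split. exact Hd. intros [a b] Hh. set (N := Cmod (a, b)) in *.
  assert (Ha : Rabs a <= N) by apply (Rabs_re_le (a, b)).
  assert (Hb : Rabs b <= N) by apply (Rabs_im_le (a, b)).
  specialize (Hd1' a ltac:(lra)). specialize (Hd2' b ltac:(lra)). specialize (Hd3' b ltac:(lra)).
  rewrite Rplus_0_l, exp_0, Rmult_1_l in Hd1'.
  rewrite Rplus_0_l, sin_0, cos_0, Rmult_1_l in Hd2'.
  rewrite Rplus_0_l, sin_0, cos_0, Ropp_0, Rmult_0_l in Hd3'.
  set (A := exp a - 1 - a) in *. set (Cb := cos b - 1 - 0) in *. set (Sb := sin b - 0 - b) in *.
  eapply Rle_trans. apply Cmod_le_sum. unfold cexp; simpl.
  replace (exp a * cos b + - (1) + - a) with (A + (1 + a + A) * Cb) by (unfold A, Cb; ring).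
  replace (exp a * sin b + - 0 + - b) with ((a + A) * (Sb + b) + Sb) by (unfold A, Sb; ring).
  pose proof (Rabs_pos a). pose proof (Rabs_pos b). pose proof (Rabs_pos A).
  pose proof (Rabs_pos Cb). pose proof (Rabs_pos Sb).
  assert (R1 : Rabs (A + (1 + a + A) * Cb) <= 3 * e1 * N).
  { eapply Rle_trans. apply Rabs_triang. rewrite Rabs_mult.
    assert (Rabs (1 + a + A) <= 2).
    { eapply Rle_trans. apply Rabs_triang. eapply Rle_trans. apply Rplus_le_compat_r. apply Rabs_triang.
      rewrite Rabs_R1. nra. }
    pose proof (Rabs_pos (1 + a + A)). nra. }
  assert (R2 : Rabs ((a + A) * (Sb + b) + Sb) <= 4 * d * N + e1 * N).
  { eapply Rle_trans. apply Rabs_triang. rewrite Rabs_mult.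
    assert (Rabs (a + A) <= 2 * Rabs a) by (eapply Rle_trans; [apply Rabs_triang|]; nra).
    assert (Rabs (Sb + b) <= 2 * d) by (eapply Rle_trans; [apply Rabs_triang|]; nra).
    pose proof (Rabs_pos (a + A)). pose proof (Rabs_pos (Sb + b)). nra. }
  assert (0 <= N) by apply Cmod_ge_0.
  assert ((4 * e1 + 4 * d) * N <= eps * N) by (apply Rmult_le_compat_r; lra). lra.
Qed.

Lemma cexp_cdiff w : cdiff cexp w (cexp w).
Proof.
  intros eps Heps. set (E := exp (fst w)). assert (HE : 0 < E) by apply exp_pos.
  destruct (cexp_small (eps / E) ltac:(apply Rdiv_lt_0_compat; lra)) as [d [Hd Hd']].
  exists d. split. exact Hd. intros y Hy.
  replace (cexp y - cexp w - (y - w) * cexp w)%C with (cexp w * (cexp (y - w) - RtoC 1 - (y - w)))%C.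
  rewrite Cmod_mult, Cmod_cexp. fold E. specialize (Hd' _ Hy).
  apply Rmult_le_compat_l with (r := E) in Hd'. 2: lra.
  eapply Rle_trans. apply Hd'. right. field. lra.
  assert (Hy' : cexp y = (cexp w * cexp (y - w))%C) by (rewrite <- cexp_add; f_equal; ring).
  rewrite Hy'. ring.
Qed.

Open Scope R_scope.

Lemma derive_cdiff' (f : C -> C) z l :
  @is_derive C_AbsRing (AbsRing_NormedModule C_AbsRing) f z l -> cdiff f z l.
Proof.
  intros [_ Hd] eps Heps.
  specialize (Hd z (fun P H => H)).
  destruct (Hd (mkposreal eps Heps)) as [d Hd']. exists d. split. apply cond_pos.
  intros y Hy. apply (Hd' y). exact Hy.
Qed.

Lemma cdiff_derive' (f : C -> C) z l : cdiff f z l ->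
  @is_derive C_AbsRing (AbsRing_NormedModule C_AbsRing) f z l.
Proof.
  intros H. split. apply is_linear_scal_l.
  intros x Hx. apply (@is_filter_lim_locally_unique _ (AbsRing_NormedModule C_AbsRing)) in Hx. subst x.
  intros eps. destruct (H eps (cond_pos eps)) as [d [Hd Hd']].
  exists (mkposreal d Hd). intros y Hy. apply Hd'. exact Hy.
Qed.

Lemma cdiff_comp f g z df dg : cdiff f (g z) df -> cdiff g z dg ->
  cdiff (fun x => f (g x)) z (dg * df)%C.
Proof.
  intros Hf Hg. apply derive_cdiff.
  apply (@is_derive_comp C_AbsRing C_NormedModule f g z df dg).
  apply cdiff_derive, Hf. apply cdiff_derive', Hg.
Qed.

Lemma cdiff_mul f g z df dg : cdiff f z df -> cdiff g z dg ->
  cdiff (fun x => f x * g x)%C z (df * g z + f z * dg)%C.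
Proof.
  intros Hf Hg. apply derive_cdiff'.
  apply (@is_derive_mult C_AbsRing f g z df dg).
  apply cdiff_derive', Hf. apply cdiff_derive', Hg.
  intros; apply Cmult_comm.
Qed.

Lemma cdiff_ext f g z l : (forall x, f x = g x) -> cdiff f z l -> cdiff g z l.
Proof.
  intros E H eps Heps. destruct (H eps Heps) as [d [Hd Hd']]. exists d. split; auto.
  intros y Hy. rewrite <- !E. auto.
Qed.

Lemma cdiff_const (c z : C) : cdiff (fun _ => c) z (RtoC 0).
Proof.
  intros eps Heps. exists 1. split. lra. intros y Hy.
  replace (c - c - (y - z) * RtoC 0)%C with (RtoC 0) by ring. rewrite Cmod_0.
  pose proof (Cmod_ge_0 (y - z)%C). nra.
Qed.

Lemma cdiff_id (z : C) : cdiff (fun x => x) z (RtoC 1).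
Proof.
  intros eps Heps. exists 1. split. lra. intros y Hy.
  replace (y - z - (y - z) * RtoC 1)%C with (RtoC 0) by ring. rewrite Cmod_0.
  pose proof (Cmod_ge_0 (y - z)%C). nra.
Qed.

Lemma cdiff_plus f g z df dg : cdiff f z df -> cdiff g z dg ->
  cdiff (fun x => f x + g x)%C z (df + dg)%C.
Proof.
  intros Hf Hg eps Heps. destruct (Hf (eps/2) ltac:(lra)) as [d1 [Hd1 Hd1']].
  destruct (Hg (eps/2) ltac:(lra)) as [d2 [Hd2 Hd2']].
  exists (Rmin d1 d2). split. apply Rmin_pos; lra. intros y Hy.
  specialize (Hd1' y ltac:(eapply Rlt_le_trans; [apply Hy|apply Rmin_l])).
  specialize (Hd2' y ltac:(eapply Rlt_le_trans; [apply Hy|apply Rmin_r])).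
  replace (f y + g y - (f z + g z) - (y - z) * (df + dg))%C with
    ((f y - f z - (y - z) * df) + (g y - g z - (y - z) * dg))%C by ring.
  eapply Rle_trans. apply Cmod_triangle. lra.
Qed.

Lemma cdiff_scal (c : C) f z df : cdiff f z df -> cdiff (fun x => c * f x)%C z (c * df)%C.
Proof.
  intros Hf. replace (c * df)%C with (RtoC 0 * f z + c * df)%C by ring.
  exact (cdiff_mul (fun _ => c) f z (RtoC 0) df (cdiff_const c z) Hf).
Qed.

Lemma cdiff_unique f z l1 l2 : cdiff f z l1 -> cdiff f z l2 -> l1 = l2.
Proof.
  intros H1 H2. apply Ceq_minus. apply Cmod_eq_0.
  destruct (Rle_lt_dec (Cmod (l1 - l2)%C) 0) as [Hle|Hlt]. pose proof (Cmod_ge_0 (l1 - l2)%C); lra.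
  exfalso. set (D := Cmod (l1 - l2)%C). assert (HD : 0 < D) by exact Hlt.
  destruct (H1 (D/4) ltac:(lra)) as [d1 [Hd1 Hd1']]. destruct (H2 (D/4) ltac:(lra)) as [d2 [Hd2 Hd2']].
  set (h := RtoC (Rmin d1 d2 / 2)). assert (Hh : 0 < Rmin d1 d2) by (apply Rmin_pos; lra).
  assert (Cmod h = Rmin d1 d2 / 2) by (unfold h; rewrite Cmod_R; apply Rabs_right; lra).
  assert (E : ((z + h) - z)%C = h) by ring.
  specialize (Hd1' (z + h)%C). specialize (Hd2' (z + h)%C). rewrite E in Hd1', Hd2'.
  assert (Hm1 : Rmin d1 d2 <= d1) by apply Rmin_l. assert (Hm2 : Rmin d1 d2 <= d2) by apply Rmin_r.
  specialize (Hd1' ltac:(lra)). specialize (Hd2' ltac:(lra)).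
  assert (Cmod (h * (l1 - l2))%C <= D / 2 * Cmod h).
  { replace (h * (l1 - l2))%C with ((f (z + h) - f z - h * l2) - (f (z + h) - f z - h * l1))%C by ring.
    eapply Rle_trans. apply Cmod_triangle. rewrite Cmod_opp. lra. }
  rewrite Cmod_mult in H0. fold D in H0. nra.
Qed.

Open Scope R_scope.

Lemma const_of_zero (f : C -> C) : (forall z, cdiff f z (RtoC 0)) -> forall w, f w = f (RtoC 0).
Proof.
  intros H w.
  set (g := fun t : R => f (RtoC 0 + RtoC t * w)%C).
  assert (Hg : forall t, 0 <= t <= 1 -> @is_derive R_AbsRing C_R_NormedModule g t zero).
  { intros t _. pose proof (cdiff_path f (RtoC 0) w (RtoC 0) t (H _)).
    rewrite Cmult_0_r in H0. exact H0. }
  pose proof (eq_is_derive g 0 1 Hg Rlt_0_1). unfold g in H0.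
  replace (RtoC 0 + RtoC 1 * w)%C with w in H0 by ring.
  replace (RtoC 0 + RtoC 0 * w)%C with (RtoC 0) in H0 by ring. auto.
Qed.

Section Nested.
Variables (W H : R) (HW : 0 < W) (HH : 0 < H) (P : nat -> R -> R -> Prop).

Definition child_ok (n : nat) (a b a' b' : R) :=
  P (S n) a' b' /\ a <= a' /\ a' + W / 2 ^ S n <= a + W / 2 ^ n /\
  b <= b' /\ b' + H / 2 ^ S n <= b + H / 2 ^ n.

Hypothesis step : forall n a b, P n a b -> exists a' b', child_ok n a b a' b'.

Lemma step_sig : forall n (ab : {ab : R * R | P n (fst ab) (snd ab)}),
  {ab' : R * R | child_ok n (fst (proj1_sig ab)) (snd (proj1_sig ab)) (fst ab') (snd ab')}.
Proof.
  intros n [[a b] Hab]. simpl.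
  apply constructive_indefinite_description.
  destruct (step n a b Hab) as [a' [b' Hc]]. exists (a', b'). exact Hc.
Defined.

Variables (a0 b0 : R) (H0 : P 0 a0 b0).

Fixpoint nseq (n : nat) : {ab : R * R | P n (fst ab) (snd ab)} :=
  match n with
  | O => exist _ (a0, b0) H0
  | S m => let c := step_sig m (nseq m) in
           exist (fun ab => P (S m) (fst ab) (snd ab)) (proj1_sig c) (proj1 (proj2_sig c))
  end.

Definition an n := fst (proj1_sig (nseq n)).
Definition bn n := snd (proj1_sig (nseq n)).

Lemma nseq_step n : child_ok n (an n) (bn n) (an (S n)) (bn (S n)).
Proof. unfold an, bn. simpl. destruct (step_sig n (nseq n)) as [ab' Hc]. simpl. exact Hc. Qed.

Lemma an_mono n m : (n <= m)%nat -> an n <= an m /\ an m + W / 2 ^ m <= an n + W / 2 ^ n /\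
  bn n <= bn m /\ bn m + H / 2 ^ m <= bn n + H / 2 ^ n.
Proof.
  induction 1. lra.
  destruct (nseq_step m) as [_ [h1 [h2 [h3 h4]]]]. lra.
Qed.

Lemma pow2_pos n : 0 < 2 ^ n. Proof. apply pow_lt; lra. Qed.

Lemma nested_limit : exists px py, forall n, exists a b, P n a b /\
  a <= px <= a + W / 2 ^ n /\ b <= py <= b + H / 2 ^ n.
Proof.
  assert (Ea : bound (fun x => exists n, x = an n)).
  { exists (an 0 + W / 2 ^ 0). intros x [n ->]. destruct (an_mono 0 n ltac:(lia)) as [_ [h _]].
    pose proof (pow2_pos n). assert (0 < W / 2 ^ n) by (apply Rdiv_lt_0_compat; lra). lra. }
  assert (Eb : bound (fun x => exists n, x = bn n)).
  { exists (bn 0 + H / 2 ^ 0). intros x [n ->]. destruct (an_mono 0 n ltac:(lia)) as [_ [_ [_ h]]].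
    pose proof (pow2_pos n). assert (0 < H / 2 ^ n) by (apply Rdiv_lt_0_compat; lra). lra. }
  destruct (completeness _ Ea (ex_intro _ (an 0) (ex_intro _ 0%nat eq_refl))) as [px [Hpx1 Hpx2]].
  destruct (completeness _ Eb (ex_intro _ (bn 0) (ex_intro _ 0%nat eq_refl))) as [py [Hpy1 Hpy2]].
  exists px, py. intros n. exists (an n), (bn n). split.
  { unfold an, bn. exact (proj2_sig (nseq n)). }
  assert (UBa : forall m, an m <= an n + W / 2 ^ n).
  { intros m. destruct (le_ge_dec n m) as [Hle|Hge].
    - destruct (an_mono n m Hle) as [_ [h _]]. pose proof (pow2_pos m).
      assert (0 < W / 2 ^ m) by (apply Rdiv_lt_0_compat; lra). lra.
    - destruct (an_mono m n Hge) as [h _]. pose proof (pow2_pos n).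
      assert (0 < W / 2 ^ n) by (apply Rdiv_lt_0_compat; lra). lra. }
  assert (UBb : forall m, bn m <= bn n + H / 2 ^ n).
  { intros m. destruct (le_ge_dec n m) as [Hle|Hge].
    - destruct (an_mono n m Hle) as [_ [_ [_ h]]]. pose proof (pow2_pos m).
      assert (0 < H / 2 ^ m) by (apply Rdiv_lt_0_compat; lra). lra.
    - destruct (an_mono m n Hge) as [_ [_ [h _]]]. pose proof (pow2_pos n).
      assert (0 < H / 2 ^ n) by (apply Rdiv_lt_0_compat; lra). lra. }
  repeat split.
  - apply Hpx1. exists n; reflexivity.
  - apply Hpx2. intros x [m ->]. apply UBa.
  - apply Hpy1. exists n; reflexivity.
  - apply Hpy2. intros x [m ->]. apply UBb.
Qed.
End Nested.

Open Scope R_scope.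

Notation CRI := (@is_RInt C_R_CompleteNormedModule).
Notation CRInt := (@RInt C_R_CompleteNormedModule).

Lemma is_RInt_Cmult (c : C) (f : R -> C) a b (l : C) :
  CRI f a b l -> CRI (fun t => c * f t)%C a b (c * l)%C.
Proof.
  intros H.
  pose proof (@is_RInt_fct_extend_fst R_NormedModule R_NormedModule f a b l H) as H1.
  pose proof (@is_RInt_fct_extend_snd R_NormedModule R_NormedModule f a b l H) as H2.
  destruct c as [c1 c2].
  apply (@is_RInt_fct_extend_pair R_NormedModule R_NormedModule (fun t => ((c1, c2) * f t)%C) a b
    (c1 * fst l - c2 * snd l) (c1 * snd l + c2 * fst l)).
  - pose proof (is_RInt_minus _ _ a b _ _ (is_RInt_scal _ a b c1 _ H1) (is_RInt_scal _ a b c2 _ H2)).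
    eapply is_RInt_ext; [|exact H0]. intros; simpl. reflexivity.
  - pose proof (is_RInt_plus _ _ a b _ _ (is_RInt_scal _ a b c1 _ H2) (is_RInt_scal _ a b c2 _ H1)).
    eapply is_RInt_ext; [|exact H0]. intros; simpl. reflexivity.
Qed.

Lemma RInt_Cmult (c : C) (f : R -> C) a b : @ex_RInt C_R_CompleteNormedModule f a b ->
  CRInt (fun t => c * f t)%C a b = (c * CRInt f a b)%C.
Proof. intros H. apply (@is_RInt_unique C_R_CompleteNormedModule). apply is_RInt_Cmult. apply (@RInt_correct C_R_CompleteNormedModule). exact H. Qed.

Lemma RInt_Cplus (f g : R -> C) a b : @ex_RInt C_R_CompleteNormedModule f a b ->
  @ex_RInt C_R_CompleteNormedModule g a b ->
  CRInt (fun t => f t + g t)%C a b = (CRInt f a b + CRInt g a b)%C.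
Proof. intros Hf Hg. apply (@is_RInt_unique C_R_CompleteNormedModule). apply (@is_RInt_plus C_R_NormedModule f g). apply (@RInt_correct C_R_CompleteNormedModule), Hf. apply (@RInt_correct C_R_CompleteNormedModule), Hg. Qed.

Lemma RInt_Cminus (f g : R -> C) a b : @ex_RInt C_R_CompleteNormedModule f a b ->
  @ex_RInt C_R_CompleteNormedModule g a b ->
  CRInt (fun t => f t - g t)%C a b = (CRInt f a b - CRInt g a b)%C.
Proof. intros Hf Hg. apply (@is_RInt_unique C_R_CompleteNormedModule). apply (@is_RInt_minus C_R_NormedModule f g). apply (@RInt_correct C_R_CompleteNormedModule), Hf. apply (@RInt_correct C_R_CompleteNormedModule), Hg. Qed.

Lemma RInt_Cbound (f : R -> C) a b M : a <= b -> @ex_RInt C_R_CompleteNormedModule f a b ->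
  (forall t, a <= t <= b -> Cmod (f t) <= M) -> Cmod (CRInt f a b) <= (b - a) * M.
Proof.
  intros Hab Hf HM. rewrite <- normCR. eapply norm_RInt_le_const. exact Hab.
  intros t Ht. rewrite normCR. apply HM, Ht. apply (@RInt_correct C_R_CompleteNormedModule), Hf.
Qed.

Lemma RInt_Cconst (c : C) a b : CRInt (fun _ => c) a b = (RtoC (b - a) * c)%C.
Proof. apply (@is_RInt_unique C_R_CompleteNormedModule). rewrite <- scalCR. apply is_RInt_const. Qed.

Lemma Chasles_C (f : R -> C) a b c : @ex_RInt C_R_CompleteNormedModule f a b ->
  @ex_RInt C_R_CompleteNormedModule f b c -> (CRInt f a b + CRInt f b c)%C = CRInt f a c.
Proof. intros H1 H2. exact (@RInt_Chasles C_R_CompleteNormedModule f a b c H1 H2). Qed.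

Definition hint (K : C -> C) (y a b : R) : C := CRInt (fun x => K (x, y)) a b.
Definition vint (K : C -> C) (x a b : R) : C := CRInt (fun y => K (x, y)) a b.
Definition rect (K : C -> C) (x1 x2 y1 y2 : R) : C :=
  (hint K y1 x1 x2 + Ci * vint K x2 y1 y2 - hint K y2 x1 x2 - Ci * vint K x1 y1 y2)%C.

Lemma Cmod_hline (t s y : R) : Cmod ((t, y) - (s, y))%C = Rabs (t - s).
Proof. unfold Cmod; simpl. replace (y + - y) with 0 by ring.
  replace ((t + - s) * ((t + - s) * 1) + 0 * (0 * 1)) with ((t - s)²) by (unfold Rsqr; ring).
  apply sqrt_Rsqr_abs. Qed.

Lemma Cmod_vline (t s x : R) : Cmod ((x, t) - (x, s))%C = Rabs (t - s).
Proof. unfold Cmod; simpl. replace (x + - x) with 0 by ring.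
  replace (0 * (0 * 1) + (t + - s) * ((t + - s) * 1)) with ((t - s)²) by (unfold Rsqr; ring).
  apply sqrt_Rsqr_abs. Qed.

Lemma ex_hint K y a b : (forall z, ccont K z) -> @ex_RInt C_R_CompleteNormedModule (fun x => K (x, y)) a b.
Proof. intros HK. apply (ex_RInt_comp K (fun x => (x, y)) 1). lra.
  intros. rewrite Cmod_hline. lra. intros; apply HK. Qed.

Lemma ex_vint K x a b : (forall z, ccont K z) -> @ex_RInt C_R_CompleteNormedModule (fun y => K (x, y)) a b.
Proof. intros HK. apply (ex_RInt_comp K (fun y => (x, y)) 1). lra.
  intros. rewrite Cmod_vline. lra. intros; apply HK. Qed.

Lemma alg4 (h1a h1b h2a h2b v1a v1b v2a v2b hma hmb vma vmb : C) :
 (h1a + h1b + Ci * (v2a + v2b) - (h2a + h2b) - Ci * (v1a + v1b) =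
 (h1a + Ci * vma - hma - Ci * v1a) + (h1b + Ci * v2a - hmb - Ci * vma) +
 (hma + Ci * vmb - h2a - Ci * v1b) + (hmb + Ci * v2b - h2b - Ci * vmb))%C.
Proof. ring. Qed.

Lemma rect_split K x1 xm x2 y1 ym y2 : (forall z, ccont K z) ->
  rect K x1 x2 y1 y2 = (rect K x1 xm y1 ym + rect K xm x2 y1 ym + rect K x1 xm ym y2 + rect K xm x2 ym y2)%C.
Proof.
  intros HK. unfold rect, hint, vint.
  rewrite <- (Chasles_C (fun x => K (x, y1)) x1 xm x2) by (apply ex_hint; auto).
  rewrite <- (Chasles_C (fun x => K (x, y2)) x1 xm x2) by (apply ex_hint; auto).
  rewrite <- (Chasles_C (fun y => K (x1, y)) y1 ym y2) by (apply ex_vint; auto).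
  rewrite <- (Chasles_C (fun y => K (x2, y)) y1 ym y2) by (apply ex_vint; auto).
  apply alg4.
Qed.


Lemma hint_minus K L y a b : (forall z, ccont K z) -> (forall z, ccont L z) ->
  hint (fun z => K z - L z)%C y a b = (hint K y a b - hint L y a b)%C.
Proof. intros HK HL. unfold hint. exact (RInt_Cminus (fun x => K (x, y)) (fun x => L (x, y)) a b
  (ex_hint K y a b HK) (ex_hint L y a b HL)). Qed.

Lemma vint_minus K L x a b : (forall z, ccont K z) -> (forall z, ccont L z) ->
  vint (fun z => K z - L z)%C x a b = (vint K x a b - vint L x a b)%C.
Proof. intros HK HL. unfold vint. exact (RInt_Cminus (fun y => K (x, y)) (fun y => L (x, y)) a b
  (ex_vint K x a b HK) (ex_vint L x a b HL)). Qed.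

Lemma alg_minus (a a' b b' c c' d d' : C) :
  ((a - a') + Ci * (b - b') - (c - c') - Ci * (d - d') =
   (a + Ci * b - c - Ci * d) - (a' + Ci * b' - c' - Ci * d'))%C.
Proof. ring. Qed.

Lemma rect_minus K L x1 x2 y1 y2 : (forall z, ccont K z) -> (forall z, ccont L z) ->
  rect (fun z => K z - L z)%C x1 x2 y1 y2 = (rect K x1 x2 y1 y2 - rect L x1 x2 y1 y2)%C.
Proof.
  intros HK HL. unfold rect. rewrite !hint_minus, !vint_minus by auto. apply alg_minus.
Qed.

Lemma ccont_scal (c : C) f z : ccont f z -> ccont (fun w => c * f w)%C z.
Proof.
  intros H eps Heps. set (M := Cmod c). assert (0 <= M) by apply Cmod_ge_0.
  destruct (H (eps / (M + 1)) ltac:(apply Rdiv_lt_0_compat; lra)) as [d [Hd Hd']].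
  exists d. split; auto. intros y Hy. specialize (Hd' y Hy).
  replace (c * f y - c * f z)%C with (c * (f y - f z))%C by ring. rewrite Cmod_mult. fold M.
  pose proof (Cmod_ge_0 (f y - f z)%C).
  apply Rle_lt_trans with ((M + 1) * Cmod (f y - f z)%C). nra.
  apply Rmult_lt_reg_l with (/ (M + 1)). apply Rinv_0_lt_compat; lra.
  rewrite <- Rmult_assoc, Rinv_l, Rmult_1_l by lra. rewrite Rmult_comm. exact Hd'.
Qed.

Lemma hint_exact G g y a b : (forall z, cdiff G z (g z)) -> (forall z, ccont g z) ->
  hint g y a b = (G (b, y) - G (a, y))%C.
Proof.
  intros HG Hg. unfold hint. apply (@is_RInt_unique C_R_CompleteNormedModule).
  assert (Ph : forall x, ((0, y) + RtoC x * RtoC 1)%C = (x, y)) by (intros; apply Ceq; simpl; ring).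
  apply (@is_RInt_derive C_R_CompleteNormedModule (fun x => G (x, y)) (fun x => g (x, y))).
  - intros x _. pose proof (cdiff_path G (0, y) (RtoC 1) (g (x, y)) x) as D.
    rewrite Ph in D. specialize (D (HG _)). rewrite Cmult_1_l in D.
    eapply is_derive_ext; [|exact D]. intros t; simpl. rewrite Ph. reflexivity.
  - intros x _. apply (comp_cont g (fun x => (x, y)) x 1). lra. intros; rewrite Cmod_hline; lra. apply Hg.
Qed.

Lemma vint_exact G g x a b : (forall z, cdiff G z (g z)) -> (forall z, ccont g z) ->
  (Ci * vint g x a b)%C = (G (x, b) - G (x, a))%C.
Proof.
  intros HG Hg. unfold vint. rewrite <- RInt_Cmult by (apply ex_vint; auto). apply (@is_RInt_unique C_R_CompleteNormedModule).
  assert (Ph : forall t, ((x, 0) + RtoC t * Ci)%C = (x, t)) by (intros; apply Ceq; simpl; ring).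
  apply (@is_RInt_derive C_R_CompleteNormedModule (fun t => G (x, t)) (fun t => Ci * g (x, t))%C).
  - intros t _. pose proof (cdiff_path G (x, 0) Ci (g (x, t)) t) as D.
    rewrite Ph in D. specialize (D (HG _)).
    eapply is_derive_ext; [|exact D]. intros s; simpl. rewrite Ph. reflexivity.
  - intros t _. apply (comp_cont (fun z => Ci * g z)%C (fun t => (x, t)) t 1). lra.
    intros; rewrite Cmod_vline; lra. apply ccont_scal, Hg.
Qed.

Lemma rect_exact G g x1 x2 y1 y2 : (forall z, cdiff G z (g z)) -> (forall z, ccont g z) ->
  rect g x1 x2 y1 y2 = RtoC 0.
Proof.
  intros HG Hg. unfold rect. rewrite !hint_exact with (G := G) by auto.
  rewrite !vint_exact with (G := G) by auto. ring.
Qed.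

Open Scope R_scope.

Lemma cdiff_minus f g z df dg : cdiff f z df -> cdiff g z dg ->
  cdiff (fun x => f x - g x)%C z (df - dg)%C.
Proof.
  intros Hf Hg eps Heps. destruct (Hf (eps/2) ltac:(lra)) as [d1 [Hd1 Hd1']].
  destruct (Hg (eps/2) ltac:(lra)) as [d2 [Hd2 Hd2']].
  exists (Rmin d1 d2). split. apply Rmin_pos; lra. intros y Hy.
  specialize (Hd1' y ltac:(eapply Rlt_le_trans; [apply Hy|apply Rmin_l])).
  specialize (Hd2' y ltac:(eapply Rlt_le_trans; [apply Hy|apply Rmin_r])).
  replace (f y - g y - (f z - g z) - (y - z) * (df - dg))%C with
    ((f y - f z - (y - z) * df) - (g y - g z - (y - z) * dg))%C by ring.
  eapply Rle_trans. apply Cmod_triangle. rewrite Cmod_opp. lra.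
Qed.

Lemma cdiff_l f z l1 l2 : l1 = l2 -> cdiff f z l1 -> cdiff f z l2.
Proof. intros ->; auto. Qed.

Lemma small_pow c d : 0 < d -> exists n, c / 2 ^ n < d.
Proof.
  intros Hd. destruct (pow_lt_1_zero (/ 2) ltac:(rewrite Rabs_right; lra) (d / (Rabs c + 1))
    ltac:(apply Rdiv_lt_0_compat; [lra|pose proof (Rabs_pos c); lra])) as [N HN].
  exists N. specialize (HN N (le_n N)). rewrite pow_inv in HN.
  pose proof (pow_lt 2 N ltac:(lra)). rewrite Rabs_right in HN.
  2: { apply Rle_ge, Rlt_le, Rinv_0_lt_compat; lra. }
  pose proof (Rabs_pos c).
  apply Rle_lt_trans with (Rabs c * / 2 ^ N). unfold Rdiv. apply Rmult_le_compat_r.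
  apply Rlt_le, Rinv_0_lt_compat; lra. apply Rle_abs.
  apply Rmult_lt_compat_l with (r := Rabs c + 1) in HN. 2: lra.
  replace ((Rabs c + 1) * (d / (Rabs c + 1))) with d in HN by (field; lra).
  assert (0 < / 2 ^ N) by (apply Rinv_0_lt_compat; lra). nra.
Qed.

Lemma affine_exact (k l p : C) : forall z,
  cdiff (fun w => k * w + (l * / RtoC 2) * ((w - p) * (w - p)))%C z (k + l * (z - p))%C.
Proof.
  intros z. eapply cdiff_l. 2: {
    apply cdiff_plus. apply cdiff_scal, cdiff_id. apply cdiff_scal. apply cdiff_mul;
    apply cdiff_minus; [apply cdiff_id|apply cdiff_const|apply cdiff_id|apply cdiff_const]. }
  cbv beta. field.
Qed.

Lemma affine_cdiff (k l p : C) z : cdiff (fun w => k + l * (w - p))%C z l.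
Proof.
  eapply cdiff_l. 2: { apply cdiff_plus. apply cdiff_const. apply cdiff_scal.
    apply cdiff_minus. apply cdiff_id. apply cdiff_const. } ring.
Qed.

Lemma goursat K dK : (forall z, cdiff K z (dK z)) ->
  forall x1 x2 y1 y2, x1 < x2 -> y1 < y2 -> rect K x1 x2 y1 y2 = RtoC 0.
Proof.
  intros HK x1 x2 y1 y2 Hx Hy.
  assert (HKc : forall z, ccont K z) by (intros; eapply cdiff_ccont; apply HK).
  apply Cmod_eq_0. apply NNPP. intros Hne.
  set (D := Cmod (rect K x1 x2 y1 y2)).
  assert (HD : 0 < D) by (pose proof (Cmod_ge_0 (rect K x1 x2 y1 y2)); fold D in H, Hne; lra).
  set (W := x2 - x1). set (H := y2 - y1).
  assert (HW : 0 < W) by (unfold W; lra). assert (HH : 0 < H) by (unfold H; lra).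
  set (P := fun n a b => D <= Cmod (rect K a (a + W / 2 ^ n) b (b + H / 2 ^ n)) * (2 ^ n * 2 ^ n)).
  assert (P0 : P 0%nat x1 y1).
  { unfold P. simpl. replace (x1 + W / 1) with x2 by (unfold W; field).
    replace (y1 + H / 1) with y2 by (unfold H; field). fold D. lra. }
  assert (Pstep : forall n a b, P n a b -> exists a' b', child_ok W H P n a b a' b').
  { intros n a b Hp. unfold P in Hp.
    set (w := W / 2 ^ S n). set (h := H / 2 ^ S n).
    pose proof (pow_lt 2 n ltac:(lra)). assert (E2 : 2 ^ S n = 2 * 2 ^ n) by reflexivity.
    assert (Hw : 0 < w) by (unfold w; apply Rdiv_lt_0_compat; [lra|apply pow_lt; lra]).
    assert (Hh : 0 < h) by (unfold h; apply Rdiv_lt_0_compat; [lra|apply pow_lt; lra]).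
    assert (Ew : W / 2 ^ n = w + w) by (unfold w; rewrite E2; field; lra).
    assert (Eh : H / 2 ^ n = h + h) by (unfold h; rewrite E2; field; lra).
    rewrite Ew, Eh in Hp.
    rewrite (rect_split K a (a + w) (a + (w + w)) b (b + h) (b + (h + h)) HKc) in Hp.
    replace (a + (w + w)) with (a + w + w) in Hp by ring.
    replace (b + (h + h)) with (b + h + h) in Hp by ring.
    assert (Hc : forall a' b', P (S n) a' b' -> (a' = a \/ a' = a + w) -> (b' = b \/ b' = b + h) ->
      exists a'' b'', child_ok W H P n a b a'' b'').
    { intros a' b' HP Ha Hb. exists a', b'. unfold child_ok. fold w h. rewrite Ew, Eh.
      split; [exact HP|]. destruct Ha, Hb; subst; lra. }
    unfold P in Hc. fold w h in Hc.
    set (M := 2 ^ S n * 2 ^ S n) in *.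
    destruct (Rle_lt_dec D (Cmod (rect K a (a + w) b (b + h)) * M)) as [q|q1].
    { apply (Hc a b); auto. }
    destruct (Rle_lt_dec D (Cmod (rect K (a + w) (a + w + w) b (b + h)) * M)) as [q|q2].
    { apply (Hc (a + w) b); auto. }
    destruct (Rle_lt_dec D (Cmod (rect K a (a + w) (b + h) (b + h + h)) * M)) as [q|q3].
    { apply (Hc a (b + h)); auto. }
    destruct (Rle_lt_dec D (Cmod (rect K (a + w) (a + w + w) (b + h) (b + h + h)) * M)) as [q|q4].
    { apply (Hc (a + w) (b + h)); auto. }
    exfalso.
    assert (HM : M = 4 * (2 ^ n * 2 ^ n)) by (unfold M; rewrite E2; ring).
    set (N := 2 ^ n * 2 ^ n) in *. assert (HN : 0 < N) by (unfold N; nra).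
    set (r1 := rect K a (a + w) b (b + h)) in *.
    set (r2 := rect K (a + w) (a + w + w) b (b + h)) in *.
    set (r3 := rect K a (a + w) (b + h) (b + h + h)) in *.
    set (r4 := rect K (a + w) (a + w + w) (b + h) (b + h + h)) in *.
    assert (Cmod (r1 + r2 + r3 + r4)%C <= Cmod r1 + Cmod r2 + Cmod r3 + Cmod r4).
    { eapply Rle_trans. apply Cmod_triangle. apply Rplus_le_compat_r.
      eapply Rle_trans. apply Cmod_triangle. apply Rplus_le_compat_r. apply Cmod_triangle. }
    rewrite HM in q1, q2, q3, q4.
    pose proof (Cmod_ge_0 (r1 + r2 + r3 + r4)%C). nra. }
  destruct (nested_limit W H HW HH P Pstep x1 y1 P0) as [px [py Hlim]].
  set (p := (px, py) : C). set (l := dK p).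
  set (e0 := D / (4 * ((W + H) * (W + H)))).
  assert (He0 : 0 < e0) by (unfold e0; apply Rdiv_lt_0_compat; nra).
  destruct (HK p e0 He0) as [d [Hd Hd']]. fold l in Hd'.
  destruct (small_pow (W + H) d Hd) as [n Hn].
  destruct (Hlim n) as [a [b [Hp [Ha Hb]]]]. unfold P in Hp.
  set (w := W / 2 ^ n) in *. set (h := H / 2 ^ n) in *.
  pose proof (pow_lt 2 n ltac:(lra)).
  assert (Hwh : w + h = (W + H) / 2 ^ n) by (unfold w, h; field; lra).
  assert (Hw : 0 < w) by (unfold w; apply Rdiv_lt_0_compat; lra).
  assert (Hh : 0 < h) by (unfold h; apply Rdiv_lt_0_compat; lra).
  set (A := fun z => (K p + l * (z - p))%C).
  set (E := fun z => (K z - A z)%C).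
  assert (HAc : forall z, ccont A z) by (intros; eapply cdiff_ccont; apply affine_cdiff).
  assert (HEc : forall z, ccont E z) by (intros; eapply cdiff_ccont; apply cdiff_minus; [apply HK|apply affine_cdiff]).
  assert (RA : rect A a (a + w) b (b + h) = RtoC 0).
  { apply (rect_exact (fun w0 => K p * w0 + (l * / RtoC 2) * ((w0 - p) * (w0 - p)))%C).
    apply affine_exact. exact HAc. }
  assert (RE : rect E a (a + w) b (b + h) = rect K a (a + w) b (b + h)).
  { unfold E. rewrite rect_minus by auto. rewrite RA. ring. }
  assert (Bnd : forall u v, a <= u <= a + w -> b <= v <= b + h -> Cmod (E (u, v)) <= e0 * (w + h)).
  { intros u v Hu Hv.
    assert (Hup : Cmod ((u, v) - p)%C <= w + h).
    { eapply Rle_trans. apply Cmod_le_sum. simpl.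
      assert (Rabs (u + - px) <= w) by (apply Rabs_le_between; lra).
      assert (Rabs (v + - py) <= h) by (apply Rabs_le_between; lra). lra. }
    assert (Hlt : Cmod ((u, v) - p)%C < d) by lra.
    specialize (Hd' _ Hlt). unfold E, A.
    replace (K (u, v) - (K p + l * ((u, v) - p)))%C with (K (u, v) - K p - ((u, v) - p) * l)%C by ring.
    eapply Rle_trans. apply Hd'. apply Rmult_le_compat_l. lra. exact Hup. }
  assert (Bsum : Cmod (rect E a (a + w) b (b + h)) <= 2 * (w + h) * (e0 * (w + h))).
  { unfold rect.
    assert (B1 : Cmod (hint E b a (a + w)) <= w * (e0 * (w + h))).
    { unfold hint. replace w with (a + w - a) at 2 by ring. apply RInt_Cbound. lra.
      apply ex_hint; auto. intros t Ht. apply Bnd; lra. }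
    assert (B2 : Cmod (hint E (b + h) a (a + w)) <= w * (e0 * (w + h))).
    { unfold hint. replace w with (a + w - a) at 2 by ring. apply RInt_Cbound. lra.
      apply ex_hint; auto. intros t Ht. apply Bnd; lra. }
    assert (B3 : Cmod (vint E (a + w) b (b + h)) <= h * (e0 * (w + h))).
    { unfold vint. replace h with (b + h - b) at 2 by ring. apply RInt_Cbound. lra.
      apply ex_vint; auto. intros t Ht. apply Bnd; lra. }
    assert (B4 : Cmod (vint E a b (b + h)) <= h * (e0 * (w + h))).
    { unfold vint. replace h with (b + h - b) at 2 by ring. apply RInt_Cbound. lra.
      apply ex_vint; auto. intros t Ht. apply Bnd; lra. }
    assert (Ci1 : Cmod Ci = 1) by (unfold Cmod, Ci; simpl; replace (0 * (0 * 1) + 1 * (1 * 1)) with 1 by ring; apply sqrt_1).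
    eapply Rle_trans. apply Cmod_triangle. rewrite Cmod_opp, Cmod_mult, Ci1.
    eapply Rle_trans. apply Rplus_le_compat_r. apply Cmod_triangle. rewrite Cmod_opp.
    eapply Rle_trans. apply Rplus_le_compat_r. apply Rplus_le_compat_r. apply Cmod_triangle.
    rewrite Cmod_mult, Ci1. lra. }
  rewrite RE in Bsum.
  assert (Hsq : (w + h) * (w + h) * (2 ^ n * 2 ^ n) = (W + H) * (W + H)).
  { rewrite Hwh. field. lra. }
  assert (D <= 2 * e0 * ((W + H) * (W + H))).
  { eapply Rle_trans. apply Hp. rewrite <- Hsq.
    apply Rle_trans with (2 * (w + h) * (e0 * (w + h)) * (2 ^ n * 2 ^ n)).
    apply Rmult_le_compat_r. nra. exact Bsum. right; ring. }
  unfold e0 in H1. assert (0 < (W + H) * (W + H)) by nra.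
  replace (2 * (D / (4 * ((W + H) * (W + H)))) * ((W + H) * (W + H))) with (D / 2) in H1 by (field; lra).
  lra.
Qed.

Open Scope R_scope.

Definition entire (K : C -> C) := forall z, exists l, cdiff K z l.

Lemma entire_ccont K : entire K -> forall z, ccont K z.
Proof. intros H z. destruct (H z) as [l Hl]. eapply cdiff_ccont; eauto. Qed.

Lemma goursat' K : entire K ->
  forall x1 x2 y1 y2, x1 < x2 -> y1 < y2 -> rect K x1 x2 y1 y2 = RtoC 0.
Proof.
  intros H. apply (goursat K (fun z => proj1_sig (constructive_indefinite_description _ (H z)))).
  intros z. exact (proj2_sig (constructive_indefinite_description _ (H z))).
Qed.

Lemma Ci_neq0 : Ci <> RtoC 0.
Proof. intro H. injection H. lra. Qed.

Lemma strip K : entire K -> (forall z, K (z + c2pi)%C = K z) ->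
  forall x1 x2, vint K x1 0 (2 * PI) = vint K x2 0 (2 * PI).
Proof.
  intros HK Hp.
  assert (Hc : forall x1 x2, x1 < x2 -> vint K x1 0 (2 * PI) = vint K x2 0 (2 * PI)).
  { intros x1 x2 Hx. pose proof (goursat' K HK x1 x2 0 (2 * PI) Hx ltac:(pose proof PI_RGT_0; lra)) as G.
    unfold rect in G.
    assert (E : hint K (2 * PI) x1 x2 = hint K 0 x1 x2).
    { unfold hint. apply (@RInt_ext C_R_CompleteNormedModule). intros x _. rewrite <- (Hp (x, 0)). f_equal. unfold c2pi; apply Ceq; simpl; ring. }
    rewrite E in G.
    assert (G' : (Ci * (vint K x2 0 (2 * PI) - vint K x1 0 (2 * PI)))%C = RtoC 0).
    { rewrite <- G. ring. }
    assert (Hz : (vint K x2 0 (2 * PI) - vint K x1 0 (2 * PI))%C =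
      (/ Ci * (Ci * (vint K x2 0 (2 * PI) - vint K x1 0 (2 * PI))))%C) by (field; apply Ci_neq0).
    rewrite G' in Hz. symmetry. apply Ceq_minus. rewrite Hz. ring. }
  intros x1 x2. destruct (Rtotal_order x1 x2) as [h|[h|h]].
  apply Hc; auto. subst; auto. symmetry; apply Hc; auto.
Qed.

Open Scope R_scope.

Definition m1 : C := RtoC (-1).

Lemma cexp_m1 x y : cexp (m1 * (x, y))%C = (exp (- x) * cos y, - (exp (- x) * sin y)).
Proof.
  unfold cexp, m1. apply Ceq; simpl.
  - replace (-1 * x - 0 * y) with (- x) by ring. replace (-1 * y + 0 * x) with (- y) by ring.
    rewrite cos_neg. reflexivity.
  - replace (-1 * x - 0 * y) with (- x) by ring. replace (-1 * y + 0 * x) with (- y) by ring.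
    rewrite sin_neg. ring.
Qed.

Lemma Cmod_cexp_m1 x y : Cmod (cexp (m1 * (x, y))%C) = exp (- x).
Proof. rewrite Cmod_cexp. unfold m1; simpl. f_equal. ring. Qed.

Lemma cexp_m1_inv u : (cexp u * cexp (m1 * u))%C = RtoC 1.
Proof.
  rewrite <- cexp_add. replace (u + m1 * u)%C with (RtoC 0). apply cexp_0.
  destruct u; unfold m1; apply Ceq; simpl; ring.
Qed.

Lemma int_cexp_m1 x : CRInt (fun y => cexp (m1 * (x, y))%C) 0 (2 * PI) = RtoC 0.
Proof.
  apply (@is_RInt_unique C_R_CompleteNormedModule).
  apply (@is_RInt_ext C_R_NormedModule (fun y => (exp (- x) * cos y, - (exp (- x) * sin y)))).
  { intros; rewrite cexp_m1; reflexivity. }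
  apply (@is_RInt_fct_extend_pair R_NormedModule R_NormedModule
    (fun y => (exp (- x) * cos y, - (exp (- x) * sin y))) 0 (2 * PI) 0 0).
  - apply (@is_RInt_ext R_NormedModule (fun y => exp (- x) * cos y)). intros; reflexivity.
    pose proof (@is_RInt_derive R_CompleteNormedModule (fun y => exp (- x) * sin y)
      (fun y => exp (- x) * cos y) 0 (2 * PI)) as H.
    cbv beta in H. match type of H with _ -> _ -> is_RInt _ _ _ ?v => replace v with 0 in H end.
    2: { rewrite sin_2PI, sin_0. unfold minus, plus, opp; simpl. ring. }
    apply H.
    + intros t _. auto_derive. auto. ring.
    + intros t _. apply (@ex_derive_continuous R_AbsRing R_NormedModule). auto_derive. auto.
  - apply (@is_RInt_ext R_NormedModule (fun y => - (exp (- x) * sin y))). intros; reflexivity.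
    pose proof (@is_RInt_derive R_CompleteNormedModule (fun y => exp (- x) * cos y)
      (fun y => - (exp (- x) * sin y)) 0 (2 * PI)) as H.
    cbv beta in H. match type of H with _ -> _ -> is_RInt _ _ _ ?v => replace v with 0 in H end.
    2: { rewrite cos_2PI, cos_0. unfold minus, plus, opp; simpl. ring. }
    apply H.
    + intros t _. auto_derive. auto. ring.
    + intros t _. apply (@ex_derive_continuous R_AbsRing R_NormedModule). auto_derive. auto.
Qed.

Lemma cdiff_cexp_m1 z : cdiff (fun u => cexp (m1 * u))%C z (m1 * RtoC 1 * cexp (m1 * z))%C.
Proof. apply (cdiff_comp cexp (fun u => m1 * u)%C). apply cexp_cdiff. apply cdiff_scal, cdiff_id. Qed.

Lemma liouville (Phi dPhi : C -> C) (M : R) : (forall z, cdiff Phi z (dPhi z)) ->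
  (forall z, Cmod (Phi z) <= M) -> forall w0, dPhi w0 = RtoC 0.
Proof.
  intros HP HM w0.
  set (K := fun u => (Phi (w0 + cexp u) * cexp (m1 * u))%C).
  assert (HKe : entire K).
  { intros u. eexists. unfold K. apply cdiff_mul.
    - apply (cdiff_comp Phi (fun u => w0 + cexp u)%C). apply HP. apply cdiff_plus. apply cdiff_const. apply cexp_cdiff.
    - apply cdiff_cexp_m1. }
  assert (HKp : forall z, K (z + c2pi)%C = K z).
  { intros z. unfold K. rewrite cexp_2pi. f_equal. rewrite <- (cexp_2pi (m1 * (z + c2pi))). f_equal.
    destruct z; unfold m1, c2pi; apply Ceq; simpl; ring. }
  pose proof (strip K HKe HKp) as HI.
  assert (HM0 : 0 <= M) by (eapply Rle_trans; [apply Cmod_ge_0 | apply (HM (RtoC 0))]).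
  assert (HPI : 0 < PI) by apply PI_RGT_0.
  assert (B1 : forall x, Cmod (vint K x 0 (2 * PI)) <= 2 * PI * (M * exp (- x))).
  { intros x. unfold vint. replace (2 * PI) with (2 * PI - 0) at 2 by ring. apply RInt_Cbound. lra.
    apply ex_vint, entire_ccont, HKe. intros y _. unfold K. rewrite Cmod_mult, Cmod_cexp_m1.
    apply Rmult_le_compat_r. left; apply exp_pos. apply HM. }
  set (c := dPhi w0). set (a := Phi w0).
  set (Lf := fun z => (c + a * cexp (m1 * z))%C).
  assert (HLe : entire Lf).
  { intros z; eexists; unfold Lf; apply cdiff_plus; [apply cdiff_const| apply cdiff_scal; apply cdiff_cexp_m1]. }
  assert (HEe : forall z, ccont (fun z => a * cexp (m1 * z))%C z).
  { intros z. eapply cdiff_ccont. apply cdiff_scal, cdiff_cexp_m1. }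
  assert (HE1 : forall z, ccont (fun z => cexp (m1 * z))%C z).
  { intros z. eapply cdiff_ccont. apply cdiff_cexp_m1. }
  assert (VL : forall x, vint Lf x 0 (2 * PI) = (RtoC (2 * PI) * c)%C).
  { intros x. unfold vint, Lf. apply (@is_RInt_unique C_R_CompleteNormedModule).
    pose proof (@is_RInt_plus C_R_NormedModule (fun _ => c) (fun y => a * cexp (m1 * (x, y)))%C 0 (2 * PI)
      _ _ (is_RInt_const 0 (2 * PI) c)
      (is_RInt_Cmult a _ 0 (2 * PI) _ (@RInt_correct C_R_CompleteNormedModule _ 0 (2 * PI)
         (ex_vint (fun z => cexp (m1 * z))%C x 0 (2 * PI) HE1)))) as H.
    cbv beta in H. rewrite int_cexp_m1 in H.
    match type of H with is_RInt _ _ _ ?v => replace v with (RtoC (2 * PI) * c)%C in H end.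
    exact H. change (plus ?A ?B) with (Cplus A B). rewrite scalCR. replace (2 * PI - 0) with (2 * PI) by ring. ring. }
  assert (B2 : forall eps, 0 < eps -> exists d, 0 < d /\ forall x, exp x < d ->
     Cmod (vint K x 0 (2 * PI) - RtoC (2 * PI) * c)%C <= 2 * PI * eps).
  { intros eps Heps. destruct (HP w0 eps Heps) as [d [Hd Hd']]. fold c in Hd'. exists d. split; auto.
    intros x Hx. rewrite <- (VL x). rewrite <- vint_minus by (apply entire_ccont; auto).
    unfold vint. apply Rle_trans with ((2 * PI - 0) * eps). 2: right; ring.
    apply (RInt_Cbound (fun y => (K (x, y) - Lf (x, y))%C) 0 (2 * PI) eps). lra.
    apply (ex_vint (fun z => K z - Lf z)%C x 0 (2 * PI)). intros z.
    destruct (HKe z) as [l1 Hl1]. destruct (HLe z) as [l2 Hl2].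
    exact (cdiff_ccont _ _ _ (cdiff_minus K Lf z l1 l2 Hl1 Hl2)).
    intros y _. set (zeta := cexp (x, y)). set (E := cexp (m1 * (x, y))%C).
    assert (HZ : (zeta * E)%C = RtoC 1) by apply cexp_m1_inv.
    assert (Eq : (K (x, y) - Lf (x, y))%C = ((Phi (w0 + zeta) - a - ((w0 + zeta) - w0) * c) * E)%C).
    { replace ((Phi (w0 + zeta) - a - ((w0 + zeta) - w0) * c) * E)%C
        with ((Phi (w0 + zeta) - a) * E - c * (zeta * E))%C by ring.
      rewrite HZ. unfold K, Lf. fold zeta E. ring. }
    rewrite Eq, Cmod_mult. replace ((w0 + zeta) - w0)%C with zeta by ring.
    assert (Hz : Cmod ((w0 + zeta) - w0)%C < d).
    { replace ((w0 + zeta) - w0)%C with zeta by ring. unfold zeta. rewrite Cmod_cexp. simpl. lra. }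
    specialize (Hd' _ Hz). fold a in Hd'.
    replace ((w0 + zeta) - w0)%C with zeta in Hd' by ring.
    unfold E. rewrite Cmod_cexp_m1. unfold zeta in Hd'. rewrite Cmod_cexp in Hd'. simpl in Hd'.
    fold zeta in Hd'.
    apply Rle_trans with (eps * exp x * exp (- x)).
    apply Rmult_le_compat_r. left; apply exp_pos. exact Hd'.
    rewrite Rmult_assoc, <- exp_plus. replace (x + - x) with 0 by ring. rewrite exp_0. lra. }
  apply Cmod_eq_0. apply NNPP. intros Hne. set (D := Cmod c).
  assert (HD : 0 < D) by (pose proof (Cmod_ge_0 c); fold D in H, Hne; lra).
  destruct (B2 (D / 4) ltac:(lra)) as [d [Hd Hd']].
  set (x1 := ln (d / 2)). assert (Hx1 : exp x1 < d) by (unfold x1; rewrite exp_ln; lra).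
  specialize (Hd' x1 Hx1).
  set (x2 := ln (4 * (M + 1) / D)).
  assert (Hx2 : exp (- x2) = D / (4 * (M + 1))).
  { unfold x2. rewrite exp_Ropp, exp_ln. field. split; lra. apply Rdiv_lt_0_compat; lra. }
  specialize (B1 x2). rewrite Hx2 in B1. rewrite (HI x1 x2) in Hd'.
  assert (Hc : Cmod (RtoC (2 * PI) * c)%C = 2 * PI * D).
  { rewrite Cmod_mult, Cmod_R, Rabs_right by lra. reflexivity. }
  assert (Cmod (RtoC (2 * PI) * c)%C <= 2 * PI * (D / 4) + 2 * PI * (M * (D / (4 * (M + 1))))).
  { replace (RtoC (2 * PI) * c)%C with (vint K x2 0 (2 * PI) - (vint K x2 0 (2 * PI) - RtoC (2 * PI) * c))%C by ring.
    eapply Rle_trans. apply Cmod_triangle. rewrite Cmod_opp. lra. }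
  rewrite Hc in H.
  assert (M * (D / (4 * (M + 1))) <= D / 4).
  { replace (M * (D / (4 * (M + 1)))) with ((D / 4) * (M / (M + 1))) by (field; lra).
    rewrite <- (Rmult_1_r (D / 4)) at 2. apply Rmult_le_compat_l. lra.
    apply Rmult_le_reg_r with (M + 1). lra. unfold Rdiv. rewrite Rmult_assoc, Rinv_l by lra. lra. }
  nra.
Qed.

Open Scope R_scope.

Lemma bounded2 (g : R -> R -> R) :
  (forall s t eps, 0 < eps -> exists d, 0 < d /\ forall s' t', Rabs (s' - s) < d -> Rabs (t' - t) < d ->
     Rabs (g s' t' - g s t) < eps) ->
  exists B, forall s t, 0 <= s <= 1 -> 0 <= t <= 1 -> g s t <= B.
Proof.
  intros Hg. apply NNPP. intros Hnb.
  set (P := fun n a b => forall B, exists s t, a <= s <= a + 1 / 2 ^ n /\ b <= t <= b + 1 / 2 ^ n /\ B < g s t).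
  assert (P0 : P 0%nat 0 0).
  { intros B. apply NNPP. intros Hn. apply Hnb. exists B. intros s t Hs Ht.
    apply Rnot_lt_le. intros Hlt. apply Hn. exists s, t. simpl. repeat split; lra. }
  assert (Pstep : forall n a b, P n a b -> exists a' b', child_ok 1 1 P n a b a' b').
  { intros n a b Hp. set (w := 1 / 2 ^ S n).
    assert (E2 : 2 ^ S n = 2 * 2 ^ n) by reflexivity. pose proof (pow_lt 2 n ltac:(lra)).
    assert (Hw : 0 < w) by (unfold w; apply Rdiv_lt_0_compat; [lra|apply pow_lt; lra]).
    assert (Ew : 1 / 2 ^ n = w + w) by (unfold w; rewrite E2; field; lra).
    assert (Hc : forall a' b', P (S n) a' b' -> (a' = a \/ a' = a + w) -> (b' = b \/ b' = b + w) ->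
      exists a'' b'', child_ok 1 1 P n a b a'' b'').
    { intros a' b' HP Ha Hb. exists a', b'. unfold child_ok. fold w. rewrite Ew.
      split; [exact HP|]. destruct Ha, Hb; subst; lra. }
    destruct (classic (P (S n) a b)) as [q|q1]. { apply (Hc a b); auto. }
    destruct (classic (P (S n) (a + w) b)) as [q|q2]. { apply (Hc (a + w) b); auto. }
    destruct (classic (P (S n) a (b + w))) as [q|q3]. { apply (Hc a (b + w)); auto. }
    destruct (classic (P (S n) (a + w) (b + w))) as [q|q4]. { apply (Hc (a + w) (b + w)); auto. }
    exfalso.
    assert (Bd : forall a' b', ~ P (S n) a' b' -> exists B, forall s t,
       a' <= s <= a' + w -> b' <= t <= b' + w -> g s t <= B).
    { intros a' b' Hn. apply NNPP. intros Hn2. apply Hn. intros B. apply NNPP. intros Hn3.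
      apply Hn2. exists B. intros s t Hs Ht. apply Rnot_lt_le. intros Hlt. apply Hn3.
      exists s, t. fold w. repeat split; lra. }
    destruct (Bd _ _ q1) as [B1 HB1]. destruct (Bd _ _ q2) as [B2 HB2].
    destruct (Bd _ _ q3) as [B3 HB3]. destruct (Bd _ _ q4) as [B4 HB4].
    destruct (Hp (Rmax (Rmax B1 B2) (Rmax B3 B4))) as [s [t [Hs [Ht Hgt]]]].
    rewrite Ew in Hs, Ht.
    pose proof (Rmax_l B1 B2). pose proof (Rmax_r B1 B2). pose proof (Rmax_l B3 B4). pose proof (Rmax_r B3 B4).
    pose proof (Rmax_l (Rmax B1 B2) (Rmax B3 B4)). pose proof (Rmax_r (Rmax B1 B2) (Rmax B3 B4)).
    destruct (Rle_lt_dec s (a + w)); destruct (Rle_lt_dec t (b + w)).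
    - assert (g s t <= B1) by (apply HB1; lra). lra.
    - assert (g s t <= B3) by (apply HB3; lra). lra.
    - assert (g s t <= B2) by (apply HB2; lra). lra.
    - assert (g s t <= B4) by (apply HB4; lra). lra. }
  destruct (nested_limit 1 1 Rlt_0_1 Rlt_0_1 P Pstep 0 0 P0) as [px [py Hlim]].
  destruct (Hg px py 1 Rlt_0_1) as [d [Hd Hd']].
  destruct (small_pow 1 d Hd) as [n Hn].
  destruct (Hlim n) as [a [b [Hp [Ha Hb]]]].
  destruct (Hp (g px py + 1)) as [s [t [Hs [Ht Hgt]]]].
  assert (Rabs (s - px) < d) by (apply Rle_lt_trans with (1 / 2 ^ n); [apply Rabs_le_between; lra|exact Hn]).
  assert (Rabs (t - py) < d) by (apply Rle_lt_trans with (1 / 2 ^ n); [apply Rabs_le_between; lra|exact Hn]).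
  specialize (Hd' s t H H0). apply Rabs_def2 in Hd'. lra.
Qed.

Lemma per_nat (f : C -> R) (v : C) : (forall w, f (w + v)%C = f w) ->
  forall (n : nat) w, f (w + RtoC (INR n) * v)%C = f w.
Proof.
  intros H n. induction n as [|n IH]; intros w.
  - simpl. replace (w + RtoC 0 * v)%C with w by ring. reflexivity.
  - rewrite S_INR. replace (w + RtoC (INR n + 1) * v)%C with ((w + RtoC (INR n) * v) + v)%C.
    rewrite H. apply IH. rewrite RtoC_plus. ring.
Qed.

Lemma per_Z (f : C -> R) (v : C) : (forall w, f (w + v)%C = f w) ->
  forall (m : Z) w, f (w + RtoC (IZR m) * v)%C = f w.
Proof.
  intros H m w. destruct m as [|p|p].
  - simpl. replace (w + RtoC 0 * v)%C with w by ring. reflexivity.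
  - rewrite <- positive_nat_Z, <- INR_IZR_INZ. apply per_nat; auto.
  - rewrite <- Pos2Z.opp_pos, opp_IZR, <- positive_nat_Z, <- INR_IZR_INZ.
    rewrite <- (per_nat f v H (Pos.to_nat p) (w + RtoC (- INR (Pos.to_nat p)) * v)%C).
    f_equal. rewrite RtoC_opp. ring.
Qed.

Open Scope R_scope.

Lemma cexp_nat (n : nat) w : cexp (RtoC (INR n) * w)%C = Cpow (cexp w) n.
Proof.
  induction n as [|n IH].
  - simpl. replace (RtoC 0 * w)%C with (RtoC 0) by ring. apply cexp_0.
  - rewrite S_INR, RtoC_plus. replace ((RtoC (INR n) + RtoC 1) * w)%C with (RtoC (INR n) * w + w)%C by ring.
    rewrite cexp_add, IH. simpl. ring.
Qed.

Lemma cexp_Z (k : Z) w : cexp (RtoC (IZR k) * w)%C = Czpow (cexp w) k.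
Proof.
  destruct k as [|p|p]; simpl.
  - replace (RtoC 0 * w)%C with (RtoC 0) by ring. apply cexp_0.
  - rewrite <- cexp_nat. f_equal. f_equal. f_equal. rewrite INR_IPR. reflexivity.
  - rewrite <- cexp_nat. rewrite INR_IPR.
    pose proof (cexp_opp (RtoC (IPR p) * w)%C).
    replace (- (RtoC (IPR p) * w))%C with (RtoC (- IPR p) * w)%C in H by (rewrite RtoC_opp; ring).
    pose proof (cexp_neq0 (RtoC (IPR p) * w)%C).
    transitivity (cexp (RtoC (- IPR p) * w)%C * cexp (RtoC (IPR p) * w)%C * / cexp (RtoC (IPR p) * w)%C)%C.
    replace (IZR (Z.neg p)) with (- IPR p) by reflexivity. field; auto. rewrite H. ring.
Qed.

Lemma cexp_one_int (c : C) : cexp (c * c2pi)%C = RtoC 1 -> exists k : Z, c = RtoC (IZR k).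
Proof.
  destruct c as [cr ci]. unfold cexp, c2pi. simpl. intros H.
  injection H as H1 H2.
  set (u := cr * 0 - ci * (2 * PI)) in *. set (th := cr * (2 * PI) + ci * 0) in *.
  pose proof (exp_pos u).
  assert (Hs : sin th = 0) by (apply Rmult_eq_reg_l with (exp u); lra).
  pose proof (sin2_cos2 th). rewrite Hs in H0. unfold Rsqr in H0.
  assert (Hc : cos th = 1).
  { assert (cos th * cos th = 1) by lra.
    assert (0 < cos th) by (apply Rmult_lt_reg_l with (exp u); lra). nra. }
  assert (Hu : exp u = 1) by (rewrite Hc in H1; lra).
  rewrite <- exp_0 in Hu. apply exp_inv in Hu.
  pose proof PI_RGT_0.
  assert (Hci : ci = 0) by (unfold u in Hu; nra).
  assert (Hs2 : sin (th / 2) = 0).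
  { pose proof (cos_2a_sin (th / 2)). replace (2 * (th / 2)) with th in H4 by field. nra. }
  apply sin_eq_0_0 in Hs2. destruct Hs2 as [k Hk]. exists k.
  apply Ceq; simpl. unfold th in Hk. rewrite Hci in Hk.
  apply Rmult_eq_reg_r with PI. 2: lra. lra. exact Hci.
Qed.

Lemma ending (G : C -> Prop) (psi sigma : C -> C)
  (hG : is_subgroup_Cstar G)
  (heq : forall (g z : C), G g -> z <> 0%C -> psi (g * z)%C = (sigma g * psi z)%C)
  (a c : C) : a <> RtoC 0 -> (forall w, psi (cexp w) = (a * cexp (c * w))%C) ->
  exists (a : C) (n : Z), a <> 0%C /\
    (forall z : C, z <> 0%C -> psi z = (a * Czpow z n)%C) /\
    (forall g, G g -> sigma g = Czpow g n).
Proof.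
  intros Ha Hpsi.
  assert (H1 : cexp (c * c2pi)%C = RtoC 1).
  { assert (E : cexp c2pi = cexp (RtoC 0)) by (rewrite <- (cexp_2pi (RtoC 0)); f_equal; ring).
    pose proof (Hpsi c2pi). pose proof (Hpsi (RtoC 0)). rewrite E in H. rewrite H in H0.
    replace (c * RtoC 0)%C with (RtoC 0) in H0 by ring. rewrite cexp_0 in H0.
    transitivity (/ a * (a * cexp (c * c2pi)))%C. field; auto. rewrite H0. field; auto. }
  destruct (cexp_one_int c H1) as [k Hk]. subst c.
  assert (Hz : forall z : C, z <> 0%C -> psi z = (a * Czpow z k)%C).
  { intros z Hz. destruct (cexp_surj z Hz) as [w Hw]. subst z. rewrite Hpsi, cexp_Z. reflexivity. }
  exists a, k. split; [exact Ha|]. split; [exact Hz|].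
  intros g Hg. destruct hG as [Hnz _].
  pose proof (heq g (RtoC 1) Hg ltac:(intro E; injection E; lra)).
  rewrite Cmult_1_r in H. rewrite (Hz g (Hnz g Hg)), (Hz (RtoC 1) ltac:(intro E; injection E; lra)) in H.
  assert (E1 : Czpow (RtoC 1) k = RtoC 1).
  { transitivity (Czpow (cexp (RtoC 0)) k). rewrite cexp_0; reflexivity.
    rewrite <- cexp_Z. replace (RtoC (IZR k) * RtoC 0)%C with (RtoC 0) by ring. apply cexp_0. }
  rewrite E1 in H.
  transitivity (/ a * (sigma g * (a * RtoC 1)))%C. field; auto. rewrite <- H. field; auto.
Qed.

Open Scope R_scope.

Lemma liouville' (Phi : C -> C) (M : R) : entire Phi ->
  (forall z, Cmod (Phi z) <= M) -> forall w, Phi w = Phi (RtoC 0).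
Proof.
  intros H HM. set (dP := fun z => proj1_sig (constructive_indefinite_description _ (H z))).
  assert (HdP : forall z, cdiff Phi z (dP z)) by (intros; exact (proj2_sig (constructive_indefinite_description _ (H z)))).
  pose proof (liouville Phi dP M HdP HM) as L.
  apply const_of_zero. intros z. rewrite <- (L z). apply HdP.
Qed.

Lemma Cmod_cexp_R (r : R) (v : C) : Cmod (cexp (RtoC r * v))%C = exp (r * fst v).
Proof. rewrite Cmod_cexp. f_equal. destruct v; simpl. ring. Qed.

Lemma Cmod_rev (a b : C) : Rabs (Cmod a - Cmod b) <= Cmod (a - b)%C.
Proof.
  apply Rabs_le_between. split.
  - pose proof (Cmod_triangle (b - a)%C a). replace (b - a + a)%C with b in H by ring.
    replace (b - a)%C with (- (a - b))%C in H by ring. rewrite Cmod_opp in H. lra.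
  - pose proof (Cmod_triangle (a - b)%C b). replace (a - b + b)%C with a in H by ring. lra.
Qed.

Section Main.
Variables (G : C -> Prop) (psi sigma : C -> C)
  (hG : is_subgroup_Cstar G)
  (hpsi : holomorphic_Cstar psi) (hpsi0 : forall z : C, z <> 0%C -> psi z <> 0%C)
  (hsig : group_hom_on G sigma)
  (heq : forall (g z : C), G g -> z <> 0%C -> psi (g * z)%C = (sigma g * psi z)%C).

Lemma dpsi_ex : forall z, exists l, z <> RtoC 0 -> cdiff psi z l.
Proof.
  intros z. destruct (classic (z = RtoC 0)) as [E|E].
  - exists (RtoC 0). intros; contradiction.
  - destruct (hpsi z E) as [l Hl]. exists l. intros _. apply derive_cdiff. exact Hl.
Qed.

Definition dpsi z := proj1_sig (constructive_indefinite_description _ (dpsi_ex z)).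
Lemma dpsi_spec z : z <> RtoC 0 -> cdiff psi z (dpsi z).
Proof. exact (proj2_sig (constructive_indefinite_description _ (dpsi_ex z))). Qed.

Definition F w := psi (cexp w).
Lemma F_cdiff w : cdiff F w (cexp w * dpsi (cexp w))%C.
Proof. apply (cdiff_comp psi cexp). apply dpsi_spec, cexp_neq0. apply cexp_cdiff. Qed.

Lemma one_neq0 : RtoC 1 <> RtoC 0.
Proof. intro E; injection E; lra. Qed.

Lemma F0 : F (RtoC 0) = psi (RtoC 1).
Proof. unfold F. rewrite cexp_0. reflexivity. Qed.

End Main.

Open Scope R_scope.

Lemma case_seq (G : C -> Prop) (psi sigma : C -> C)
  (hG : is_subgroup_Cstar G)
  (hpsi : holomorphic_Cstar psi) (hpsi0 : forall z : C, z <> 0%C -> psi z <> 0%C)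
  (heq : forall (g z : C), G g -> z <> 0%C -> psi (g * z)%C = (sigma g * psi z)%C)
  (g : nat -> C) (hg : forall n, G (g n) /\ g n <> 1%C)
  (hlim : filterlim g eventually (locally (1%C : C))) :
  exists c, forall w, psi (cexp w) = (psi (RtoC 1) * cexp (c * w))%C.
Proof.
  set (Q := fun n => ((sigma (g n) - RtoC 1) / (g n - RtoC 1))%C).
  assert (Lim : forall z, z <> RtoC 0 -> forall eps, 0 < eps -> exists N, forall n, (N <= n)%nat ->
     Cmod (Q n - z * dpsi psi hpsi z / psi z)%C <= eps).
  { intros z Hz eps Heps. set (l := dpsi psi hpsi z). set (P := psi z).
    assert (HP : P <> RtoC 0) by (apply hpsi0; auto).
    assert (HPm : 0 < Cmod P) by (apply Cmod_gt_0; auto).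
    assert (Hzm : 0 < Cmod z) by (apply Cmod_gt_0; auto).
    destruct (dpsi_spec psi hpsi z Hz (eps * Cmod P / Cmod z) ltac:(apply Rdiv_lt_0_compat; nra)) as [d [Hd Hd']].
    fold l in Hd'.
    assert (He : 0 < d / (2 * Cmod z + 1)) by (apply Rdiv_lt_0_compat; lra).
    pose proof (proj1 (filterlim_locally g (1%C : C)) hlim (mkposreal _ He)) as Hev.
    destruct Hev as [N HN]. exists N. intros n Hn. specialize (HN n Hn). simpl in HN.
    apply Cmod_of_ball in HN.
    destruct (hg n) as [Hgn Hg1].
    set (u := (g n - RtoC 1)%C).
    assert (Hu : u <> RtoC 0) by (unfold u; intro E; apply Hg1; apply Ceq_minus; exact E).
    assert (Hum : 0 < Cmod u) by (apply Cmod_gt_0; auto).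
    set (y := (g n * z)%C).
    assert (Hyz : (y - z)%C = (u * z)%C) by (unfold y, u; ring).
    assert (Hyd : Cmod (y - z)%C < d).
    { rewrite Hyz, Cmod_mult. fold u in HN.
      apply Rle_lt_trans with (2 * (d / (2 * Cmod z + 1)) * Cmod z). apply Rmult_le_compat_r; lra.
      apply Rle_lt_trans with (d * ((2 * Cmod z) / (2 * Cmod z + 1))). right; field; lra.
      rewrite <- (Rmult_1_r d) at 2. apply Rmult_lt_compat_l. lra.
      apply Rmult_lt_reg_r with (2 * Cmod z + 1). lra. unfold Rdiv. rewrite Rmult_assoc, Rinv_l by lra. lra. }
    specialize (Hd' y Hyd).
    assert (Hy : psi y = (sigma (g n) * P)%C) by (apply heq; auto).
    rewrite Hy, Hyz in Hd'.
    assert (EQ : (Q n - z * l / P)%C = ((sigma (g n) * P - P - u * z * l) / (u * P))%C).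
    { unfold Q. fold u. field. split; auto. }
    rewrite EQ, Cmod_div by (apply Cmult_neq_0; auto). rewrite Cmod_mult.
    rewrite Cmod_mult in Hd'.
    apply Rmult_le_reg_r with (Cmod u * Cmod P). nra.
    unfold Rdiv. rewrite Rmult_assoc, Rinv_l by nra. rewrite Rmult_1_r.
    eapply Rle_trans. apply Hd'. right. field. lra. }
  set (c := (RtoC 1 * dpsi psi hpsi (RtoC 1) / psi (RtoC 1))%C).
  assert (Hc : forall z, z <> RtoC 0 -> (z * dpsi psi hpsi z)%C = (c * psi z)%C).
  { intros z Hz. set (Lz := (z * dpsi psi hpsi z / psi z)%C).
    assert (E : Lz = c).
    { apply Ceq_minus, Cmod_eq_0. apply NNPP. intros Hne.
      set (D := Cmod (Lz - c)%C). assert (HD : 0 < D) by (pose proof (Cmod_ge_0 (Lz - c)%C); fold D in H, Hne; lra).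
      destruct (Lim z Hz (D / 4) ltac:(lra)) as [N1 HN1].
      destruct (Lim (RtoC 1) one_neq0 (D / 4) ltac:(lra)) as [N2 HN2].
      specialize (HN1 (max N1 N2) ltac:(lia)). specialize (HN2 (max N1 N2) ltac:(lia)).
      fold Lz in HN1. fold c in HN2.
      assert (D <= D / 4 + D / 4).
      { unfold D at 1. replace (Lz - c)%C with ((Q (max N1 N2) - c) - (Q (max N1 N2) - Lz))%C by ring.
        eapply Rle_trans. apply Cmod_triangle. rewrite Cmod_opp. lra. }
      lra. }
    unfold Lz in E. rewrite <- E. field. apply hpsi0; auto. }
  set (nc := (- c)%C).
  set (Phi := fun w => (F psi w * cexp (nc * w))%C).
  assert (HPhi : forall w, cdiff Phi w (RtoC 0)).
  { intros w. eapply cdiff_l. 2: { apply cdiff_mul. apply F_cdiff. apply (cdiff_comp cexp (fun u => nc * u)%C).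
      apply cexp_cdiff. apply cdiff_scal, cdiff_id. }
    rewrite Hc by apply cexp_neq0. unfold F, nc. ring. }
  pose proof (const_of_zero Phi HPhi) as Hconst.
  exists c. intros w. specialize (Hconst w). unfold Phi in Hconst.
  rewrite F0 in Hconst. replace (nc * RtoC 0)%C with (RtoC 0) in Hconst by ring. rewrite cexp_0, Cmult_1_r in Hconst.
  rewrite <- Hconst.
  assert (E1 : (cexp (nc * w) * cexp (c * w))%C = RtoC 1).
  { rewrite <- cexp_add. replace (nc * w + c * w)%C with (RtoC 0) by (unfold nc; ring). apply cexp_0. }
  unfold F. transitivity (psi (cexp w) * (cexp (nc * w) * cexp (c * w)))%C. rewrite E1; ring. ring.
Qed.

Open Scope R_scope.

Lemma Cmod_c2pi : Cmod c2pi = 2 * PI.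
Proof. unfold Cmod, c2pi; simpl. replace (0 * (0 * 1) + 2 * PI * (2 * PI * 1)) with ((2 * PI)²) by (unfold Rsqr; ring).
  apply sqrt_Rsqr. pose proof PI_RGT_0; lra. Qed.

Lemma case_q (G : C -> Prop) (psi sigma : C -> C)
  (hG : is_subgroup_Cstar G)
  (hpsi : holomorphic_Cstar psi) (hpsi0 : forall z : C, z <> 0%C -> psi z <> 0%C)
  (hsig : group_hom_on G sigma)
  (heq : forall (g z : C), G g -> z <> 0%C -> psi (g * z)%C = (sigma g * psi z)%C)
  (q : C) (hq : G q) (hq1 : Cmod q <> 1) :
  exists c, forall w, psi (cexp w) = (psi (RtoC 1) * cexp (c * w))%C.
Proof.
  destruct hG as [Hnz [_ [_ _]]]. destruct hsig as [Hsg _].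
  destruct (cexp_surj q (Hnz q hq)) as [L HL].
  set (Lr := fst L).
  assert (HLr : Lr <> 0).
  { intro E. apply hq1. rewrite <- HL, Cmod_cexp. fold Lr. rewrite E. apply exp_0. }
  set (s := sigma q). assert (Hs : s <> RtoC 0) by (apply Hnz, Hsg, hq).
  assert (Hsm : 0 < Cmod s) by (apply Cmod_gt_0; auto).
  set (al := ln (Cmod s) / Lr).
  set (Phi := fun w => (F psi w * cexp (RtoC (- al) * w))%C).
  assert (HPe : entire Phi).
  { intros w. eexists. unfold Phi. apply cdiff_mul. apply (F_cdiff psi hpsi).
    apply (cdiff_comp cexp (fun u => RtoC (- al) * u)%C). apply cexp_cdiff. apply cdiff_scal, cdiff_id. }
  set (Pm := fun w => Cmod (Phi w)).
  assert (Pm_eq : forall w, Pm w = Cmod (F psi w) * exp (- al * fst w)).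
  { intros w. unfold Pm, Phi. rewrite Cmod_mult, Cmod_cexp_R. reflexivity. }
  assert (Per1 : forall w, Pm (w + c2pi)%C = Pm w).
  { intros w. rewrite !Pm_eq. unfold F. rewrite cexp_2pi. f_equal. f_equal. unfold c2pi; simpl. ring. }
  assert (Per2 : forall w, Pm (w + L)%C = Pm w).
  { intros w. rewrite !Pm_eq. unfold F. rewrite cexp_add, HL, Cmult_comm, heq by (auto; apply cexp_neq0).
    rewrite Cmod_mult. fold s.
    replace (- al * fst (w + L)%C) with (- al * fst w + - (al * Lr)) by (simpl; unfold Lr; ring).
    rewrite exp_plus. replace (al * Lr) with (ln (Cmod s)) by (unfold al; field; auto).
    rewrite exp_Ropp, exp_ln by auto. field. lra. }
  set (gg := fun a b => Pm (RtoC a * c2pi + RtoC b * L)%C).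
  assert (Hgg : forall a b eps, 0 < eps -> exists d, 0 < d /\ forall a' b', Rabs (a' - a) < d -> Rabs (b' - b) < d ->
     Rabs (gg a' b' - gg a b) < eps).
  { intros a b eps Heps. destruct (entire_ccont Phi HPe (RtoC a * c2pi + RtoC b * L)%C eps Heps) as [d [Hd Hd']].
    set (K := 2 * PI + Cmod L + 1). assert (HK : 0 < K) by (unfold K; pose proof PI_RGT_0; pose proof (Cmod_ge_0 L); lra).
    exists (d / K). split. apply Rdiv_lt_0_compat; lra. intros a' b' Ha Hb.
    unfold gg, Pm. eapply Rle_lt_trans. apply Cmod_rev. apply Hd'.
    replace ((RtoC a' * c2pi + RtoC b' * L) - (RtoC a * c2pi + RtoC b * L))%C
      with (RtoC (a' - a) * c2pi + RtoC (b' - b) * L)%C by (rewrite !RtoC_minus; ring).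
    eapply Rle_lt_trans. apply Cmod_triangle. rewrite !Cmod_mult, !Cmod_R, Cmod_c2pi.
    pose proof (Cmod_ge_0 L). pose proof PI_RGT_0.
    assert (Rabs (a' - a) * (2 * PI) <= d / K * (2 * PI)) by (apply Rmult_le_compat_r; lra).
    assert (Rabs (b' - b) * Cmod L <= d / K * Cmod L) by (apply Rmult_le_compat_r; lra).
    assert (0 < d / K) by (apply Rdiv_lt_0_compat; lra).
    apply Rlt_le_trans with (d / K * K). replace (d / K * K) with (d / K * (2 * PI) + d / K * Cmod L + d / K) by (unfold K; ring). lra. right; field; lra. }
  destruct (bounded2 gg Hgg) as [B HB].
  assert (Hbnd : forall w, Cmod (Phi w) <= B).
  { intros [x y]. pose proof PI_RGT_0.
    set (t := x / Lr). set (s0 := (y - t * snd L) / (2 * PI)).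
    set (m := (up s0 - 1)%Z). set (n := (up t - 1)%Z).
    destruct (archimed s0) as [A1 A2]. destruct (archimed t) as [A3 A4].
    assert (Em : IZR m = IZR (up s0) - 1) by (unfold m; rewrite minus_IZR; reflexivity).
    assert (En : IZR n = IZR (up t) - 1) by (unfold n; rewrite minus_IZR; reflexivity).
    set (base := (RtoC (s0 - IZR m) * c2pi + RtoC (t - IZR n) * L)%C).
    assert (Ew : (x, y) = (base + RtoC (IZR m) * c2pi + RtoC (IZR n) * L)%C).
    { unfold base, c2pi. destruct L as [l1 l2]. unfold Lr in *; simpl in *. unfold t, s0 in *.
      clearbody m n. apply Ceq; simpl; unfold t. all: field; split; lra. }
    change (Pm (x, y) <= B). rewrite Ew.
    rewrite (per_Z Pm L Per2 n). rewrite (per_Z Pm c2pi Per1 m).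
    apply HB; lra. }
  pose proof (liouville' Phi B HPe Hbnd) as Hc.
  exists (RtoC al). intros w. specialize (Hc w). unfold Phi in Hc.
  rewrite F0 in Hc. replace (RtoC (- al) * RtoC 0)%C with (RtoC 0) in Hc by ring. rewrite cexp_0, Cmult_1_r in Hc.
  rewrite <- Hc.
  assert (E1 : (cexp (RtoC (- al) * w) * cexp (RtoC al * w))%C = RtoC 1).
  { rewrite <- cexp_add. replace (RtoC (- al) * w + RtoC al * w)%C with (RtoC 0) by (rewrite RtoC_opp; ring). apply cexp_0. }
  unfold F. transitivity (psi (cexp w) * (cexp (RtoC (- al) * w) * cexp (RtoC al * w)))%C. rewrite E1; ring. ring.
Qed.

Theorem mainTheorem7 (G : C -> Prop) (psi sigma : C -> C)
  (hG : is_subgroup_Cstar G) (hacc : accumulation_property G)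
  (hpsi : holomorphic_Cstar psi) (hpsi0 : forall z : C, z <> 0%C -> psi z <> 0%C)
  (hsig : group_hom_on G sigma)
  (heq : forall (g z : C), G g -> z <> 0%C -> psi (g * z)%C = (sigma g * psi z)%C) :
  exists (a : C) (n : Z), a <> 0%C /\
    (forall z : C, z <> 0%C -> psi z = (a * Czpow z n)%C) /\
    (forall g, G g -> sigma g = Czpow g n).
Proof.
  assert (Hex : exists c, forall w, psi (cexp w) = (psi (RtoC 1) * cexp (c * w))%C).
  { destruct hacc as [[q [hq hq1]] | [g [hg hlim]]].
    - exact (case_q G psi sigma hG hpsi hpsi0 hsig heq q hq hq1).
    - exact (case_seq G psi sigma hG hpsi hpsi0 heq g hg hlim). }
  destruct Hex as [c Hc].
  apply (ending G psi sigma hG heq (psi (RtoC 1)) c). apply hpsi0. intro E; injection E; lra. exact Hc.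
Qed.
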